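(* Let $\lambda$ be real analytic on $[0,T]$ with $\|\lambda\|_{C^{1/2}}\le1$, and suppose $\lambda$ extends complex-analytically to $E=\{z\in\mathbb{C}:\operatorname{dist}(z,[0,T])\le\delta\}$ for some $\delta>0$; let $M$ bound $|\lambda'|$ and $|\lambda''|$ on $E$. Then there exists $\delta_1\in(0,\delta)$, depending only on $\delta,M,T$, such that with $E_1=\{t\in\mathbb{C}:0<\operatorname{Re}t<T+\delta_1,\ |\operatorname{Im}t|<\delta_1\}$, for every $s\in E_1$ and $\epsilon\in(0,1]$ the initial value problem $$\partial_uf(u,s,\epsilon)=\frac{-2}{f(u,s,\epsilon)}+\lambda'(s-u),\quad u\ge0,\qquad f(0,s,\epsilon)=i\epsilon$$ has a unique solution for $u\in[0,\operatorname{Re}s+\delta_1]$, and $$\max\Big(\sqrt{2u},\frac\epsilon2\Big)\le\operatorname{Im}f(u,s,\epsilon)\quad\text{for }0\le u\le\operatorname{Re}s+\delta_1.$$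
   Context: $\|\lambda\|_{C^{1/2}}=\sup_{s\ne t\in[0,T]}|\lambda(t)-\lambda(s)|/|t-s|^{1/2}$. Here $u$ is a real variable and $s$ a complex parameter; $\lambda'$ denotes the complex derivative of the analytic extension. *)

(* Defs.v *)
From Stdlib Require Import Reals Lra.
Open Scope R_scope.

Definition Cpx : Type := (R * R)%type.
Definition Re (z : Cpx) : R := fst z.
Definition Im (z : Cpx) : R := snd z.
Definition RtoC (x : R) : Cpx := (x, 0).
Definition Ci : Cpx := (0, 1).
Definition Cadd (z w : Cpx) : Cpx := (Re z + Re w, Im z + Im w).
Definition Copp (z : Cpx) : Cpx := (- Re z, - Im z).
Definition Csub (z w : Cpx) : Cpx := Cadd z (Copp w).
Definition Cmul (z w : Cpx) : Cpx :=
  (Re z * Re w - Im z * Im w, Re z * Im w + Im z * Re w).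
Definition Cinv (z : Cpx) : Cpx :=
  (Re z / (Re z ^ 2 + Im z ^ 2), - Im z / (Re z ^ 2 + Im z ^ 2)).
Definition Cdiv (z w : Cpx) : Cpx := Cmul z (Cinv w).
Definition Cmod (z : Cpx) : R := sqrt (Re z ^ 2 + Im z ^ 2).

Definition C_has_deriv (g : Cpx -> Cpx) (z d : Cpx) : Prop :=
  forall eps, 0 < eps -> exists r, 0 < r /\
    forall h : Cpx, Cmod h < r ->
      Cmod (Csub (Csub (g (Cadd z h)) (g z)) (Cmul d h)) <= eps * Cmod h.

Definition C_open (U : Cpx -> Prop) : Prop :=
  forall z, U z -> exists r, 0 < r /\ forall w, Cmod (Csub w z) < r -> U w.

(** E = { z : dist(z,[0,T]) <= delta } (the distance to the compact interval is attained). *)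
Definition Eset (T delta : R) (z : Cpx) : Prop :=
  exists x, 0 <= x <= T /\ Cmod (Csub z (RtoC x)) <= delta.

Definition E1set (T delta1 : R) (t : Cpx) : Prop :=
  0 < Re t < T + delta1 /\ Rabs (Im t) < delta1.

Definition has_deriv_within (f : R -> Cpx) (a b u : R) (v : Cpx) : Prop :=
  forall eps, 0 < eps -> exists r, 0 < r /\
    forall h, a <= u + h <= b -> Rabs h < r ->
      Cmod (Csub (Csub (f (u + h)) (f u)) (Cmul (RtoC h) v)) <= eps * Rabs h.

Definition is_ivp_solution (dlam : Cpx -> Cpx) (s : Cpx) (eps b : R) (f : R -> Cpx) : Prop :=
  f 0 = Cmul (RtoC eps) Ci /\
  forall u, 0 <= u <= b ->
    f u <> RtoC 0 /\
    has_deriv_within f 0 b u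
      (Cadd (Cdiv (RtoC (-2)) (f u)) (dlam (Csub s (RtoC u)))).

(* Main.v *)
Require Import Defs.
From Stdlib Require Import Reals Lra Psatz FunctionalExtensionality.
From Coquelicot Require Import Rcomplements Hierarchy Derive RInt RInt_analysis Continuity Lim_seq Rbar.
From Coquelicot Require Complex.
Open Scope R_scope.

Lemma Cmod_ge0 z : 0 <= Cmod z.
Proof. exact (Complex.Cmod_ge_0 z). Qed.
Lemma Cmod_tri z w : Cmod (Cadd z w) <= Cmod z + Cmod w.
Proof. exact (Complex.Cmod_triangle z w). Qed.
Lemma Re_le z : Rabs (Re z) <= Cmod z.
Proof. exact (Complex.re_le_Cmod z). Qed.
Lemma Im_le z : Rabs (Im z) <= Cmod z.
Proof. pose proof (Complex.Rmax_Cmod z). unfold Cmod, Im. eapply Rle_trans; [|exact H]. apply Rmax_r. Qed.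
Lemma Cmod_sq z : Cmod z ^ 2 = Re z ^ 2 + Im z ^ 2.
Proof. unfold Cmod. rewrite pow2_sqrt; auto. nra. Qed.
Lemma Cmod_le_sum z : Cmod z <= Rabs (Re z) + Rabs (Im z).
Proof.
  unfold Cmod. rewrite <- (sqrt_pow2 (Rabs (Re z) + Rabs (Im z))).
  2: { pose proof (Rabs_pos (Re z)); pose proof (Rabs_pos (Im z)); lra. }
  apply sqrt_le_1_alt. rewrite <- (pow2_abs (Re z)), <- (pow2_abs (Im z)).
  pose proof (Rabs_pos (Re z)); pose proof (Rabs_pos (Im z)); nra.
Qed.
Lemma Cmod_mul z w : Cmod (Cmul z w) = Cmod z * Cmod w.
Proof. exact (Complex.Cmod_mult z w). Qed.
Lemma Cmod_RtoC x : Cmod (RtoC x) = Rabs x.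
Proof. exact (Complex.Cmod_R x). Qed.
Lemma Cmod_le_of_sq z c : 0 <= c -> Re z ^ 2 + Im z ^ 2 <= c ^ 2 -> Cmod z <= c.
Proof. intros. unfold Cmod. rewrite <- (sqrt_pow2 c H). apply sqrt_le_1_alt. exact H0. Qed.
Lemma Cmod_eq0 z : Cmod z = 0 -> z = RtoC 0.
Proof. intros. apply (Complex.Cmod_eq_0 z) in H. exact H. Qed.

Lemma Csub_parts z w : Csub z w = (Re z - Re w, Im z - Im w).
Proof. unfold Csub, Cadd, Copp, Re, Im; simpl. f_equal; ring. Qed.
Lemma Cmul_RtoC_parts h v : Cmul (RtoC h) v = (h * Re v, h * Im v).
Proof. unfold Cmul, RtoC, Re, Im; simpl. f_equal; ring. Qed.

Lemma hdw_of_comp (f : R -> Cpx) a b u v1 v2 :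
  derivable_pt_lim (fun t => Re (f t)) u v1 ->
  derivable_pt_lim (fun t => Im (f t)) u v2 ->
  has_deriv_within f a b u (v1, v2).
Proof.
  intros H1 H2 eps Heps.
  destruct (H1 (eps/2)) as [d1 Hd1]; [lra|].
  destruct (H2 (eps/2)) as [d2 Hd2]; [lra|].
  exists (Rmin d1 d2). split. { apply Rmin_pos; apply cond_pos. }
  intros h _ Hh.
  destruct (Req_dec h 0) as [->|Hh0].
  { rewrite Rplus_0_r, Rabs_R0, Rmult_0_r. apply Rle_trans with (Cmod (RtoC 0)).
    right. f_equal. rewrite !Csub_parts, Cmul_RtoC_parts. unfold RtoC. simpl. f_equal; ring.
    rewrite Cmod_RtoC, Rabs_R0. lra. }
  assert (Hh1 : Rabs h < d1) by (eapply Rlt_le_trans; [exact Hh| apply Rmin_l]).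
  assert (Hh2 : Rabs h < d2) by (eapply Rlt_le_trans; [exact Hh| apply Rmin_r]).
  specialize (Hd1 h Hh0 Hh1). specialize (Hd2 h Hh0 Hh2).
  eapply Rle_trans. apply Cmod_le_sum.
  rewrite !Csub_parts, Cmul_RtoC_parts. simpl.
  assert (Hp : 0 < Rabs h) by (apply Rabs_pos_lt; auto).
  assert (E1 : Rabs (Re (f (u + h)) - Re (f u) - h * v1) = Rabs h * Rabs ((Re (f (u + h)) - Re (f u)) / h - v1)).
  { rewrite <- Rabs_mult. f_equal. field. auto. }
  assert (E2 : Rabs (Im (f (u + h)) - Im (f u) - h * v2) = Rabs h * Rabs ((Im (f (u + h)) - Im (f u)) / h - v2)).
  { rewrite <- Rabs_mult. f_equal. field. auto. }
  rewrite E1, E2. nra.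
Qed.

Lemma comp_of_hdw (f : R -> Cpx) a b u v :
  a < u < b -> has_deriv_within f a b u v ->
  derivable_pt_lim (fun t => Re (f t)) u (Re v) /\
  derivable_pt_lim (fun t => Im (f t)) u (Im v).
Proof.
  intros Hu H. split; intros eps Heps;
  destruct (H (eps/2)) as [r [Hr Hr']]; try lra;
  assert (Hm : 0 < Rmin r (Rmin (u - a) (b - u))) by (repeat apply Rmin_pos; lra);
  exists (mkposreal _ Hm); intros h Hh0 Hh; simpl in Hh;
  assert (Hr1 : Rabs h < r) by (eapply Rlt_le_trans; [exact Hh|apply Rmin_l]);
  assert (Hr2 : Rabs h < Rmin (u - a) (b - u)) by (eapply Rlt_le_trans; [exact Hh|apply Rmin_r]);
  assert (Hab : a <= u + h <= b) by
    (pose proof (Rmin_l (u-a) (b-u)); pose proof (Rmin_r (u-a) (b-u));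
     revert Hr2; unfold Rabs; destruct (Rcase_abs h); lra);
  specialize (Hr' h Hab Hr1);
  rewrite Csub_parts, Csub_parts, Cmul_RtoC_parts in Hr';
  assert (Hp : 0 < Rabs h) by (apply Rabs_pos_lt; auto).
  - pose proof (Re_le ((Re (f (u + h)) - Re (f u) - h * Re v,
       Im (f (u + h)) - Im (f u) - h * Im v))) as HR. unfold Re at 1 in HR. simpl in HR.
    assert (E1 : Rabs (Re (f (u + h)) - Re (f u) - h * Re v) = Rabs h * Rabs ((Re (f (u + h)) - Re (f u)) / h - Re v)).
    { rewrite <- Rabs_mult. f_equal. field. auto. }
    rewrite E1 in HR. cbn [Re Im fst snd] in *. nra.
  - pose proof (Im_le ((Re (f (u + h)) - Re (f u) - h * Re v,
       Im (f (u + h)) - Im (f u) - h * Im v))) as HR. unfold Im at 1 in HR. simpl in HR.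
    assert (E1 : Rabs (Im (f (u + h)) - Im (f u) - h * Im v) = Rabs h * Rabs ((Im (f (u + h)) - Im (f u)) / h - Im v)).
    { rewrite <- Rabs_mult. f_equal. field. auto. }
    rewrite E1 in HR. cbn [Re Im fst snd] in *. nra.
Qed.

Lemma cont_pt_intro (f : R -> R) x0 :
  (forall eps, 0 < eps -> exists d, 0 < d /\ forall x, Rabs (x - x0) < d -> Rabs (f x - f x0) < eps) ->
  continuity_pt f x0.
Proof.
  intros H eps Heps. destruct (H eps Heps) as [d [Hd H']].
  exists d. split; auto. intros x [_ Hx]. apply H'. exact Hx.
Qed.

Lemma cont_pt_elim (f : R -> R) x0 : continuity_pt f x0 ->
  forall eps, 0 < eps -> exists d, 0 < d /\ forall x, Rabs (x - x0) < d -> Rabs (f x - f x0) < eps.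
Proof.
  intros H eps Heps. destruct (H eps Heps) as [d [Hd H']].
  exists d. split; auto. intros x Hx. destruct (Req_dec x0 x) as [<-|Hne].
  - unfold Rminus. rewrite Rplus_opp_r, Rabs_R0. auto.
  - apply (H' x). split; [split; auto; exact I| exact Hx].
Qed.

Definition ccont (g : R -> Cpx) (t : R) : Prop :=
  forall eps, 0 < eps -> exists d, 0 < d /\ forall t', Rabs (t' - t) < d -> Cmod (Csub (g t') (g t)) < eps.

Lemma ccont_Re g t : ccont g t -> continuity_pt (fun u => Re (g u)) t.
Proof.
  intros H. apply cont_pt_intro. intros eps Heps. destruct (H eps Heps) as [d [Hd H']].
  exists d; split; auto. intros x Hx. specialize (H' x Hx).
  pose proof (Re_le (Csub (g x) (g t))). rewrite Csub_parts in H0, H'. cbn [Re Im fst snd] in *. lra.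
Qed.
Lemma ccont_Im g t : ccont g t -> continuity_pt (fun u => Im (g u)) t.
Proof.
  intros H. apply cont_pt_intro. intros eps Heps. destruct (H eps Heps) as [d [Hd H']].
  exists d; split; auto. intros x Hx. specialize (H' x Hx).
  pose proof (Im_le (Csub (g x) (g t))). rewrite Csub_parts in H0, H'. cbn [Re Im fst snd] in *. lra.
Qed.
Lemma ccont_of_parts g t : continuity_pt (fun u => Re (g u)) t -> continuity_pt (fun u => Im (g u)) t -> ccont g t.
Proof.
  intros H1 H2 eps Heps.
  destruct (cont_pt_elim _ _ H1 (eps/2)) as [d1 [Hd1 H1']]; [lra|].
  destruct (cont_pt_elim _ _ H2 (eps/2)) as [d2 [Hd2 H2']]; [lra|].
  exists (Rmin d1 d2). split. apply Rmin_pos; auto.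
  intros x Hx. specialize (H1' x (Rlt_le_trans _ _ _ Hx (Rmin_l _ _))).
  specialize (H2' x (Rlt_le_trans _ _ _ Hx (Rmin_r _ _))).
  eapply Rle_lt_trans. apply Cmod_le_sum. rewrite Csub_parts. cbn [Re Im fst snd] in *. lra.
Qed.

Lemma ccont_lip (Q : Cpx -> Cpx) L g t : 0 < L ->
  (forall z w, Cmod (Csub (Q z) (Q w)) <= L * Cmod (Csub z w)) ->
  ccont g t -> ccont (fun u => Q (g u)) t.
Proof.
  intros HL HQ H eps Heps. destruct (H (eps / L)) as [d [Hd H']].
  { apply Rdiv_lt_0_compat; auto. }
  exists d. split; auto. intros x Hx. eapply Rle_lt_trans. apply HQ.
  specialize (H' x Hx). apply Rmult_lt_compat_l with (r := L) in H'; auto.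
  replace (L * (eps / L)) with eps in H' by (field; lra). exact H'.
Qed.

Lemma ccont_add g1 g2 t : ccont g1 t -> ccont g2 t -> ccont (fun u => Cadd (g1 u) (g2 u)) t.
Proof.
  intros H1 H2 eps Heps.
  destruct (H1 (eps/2)) as [d1 [Hd1 H1']]; [lra|].
  destruct (H2 (eps/2)) as [d2 [Hd2 H2']]; [lra|].
  exists (Rmin d1 d2). split. apply Rmin_pos; auto.
  intros x Hx. specialize (H1' x (Rlt_le_trans _ _ _ Hx (Rmin_l _ _))).
  specialize (H2' x (Rlt_le_trans _ _ _ Hx (Rmin_r _ _))).
  replace eps with (eps/2 + eps/2) by field.
  eapply Rle_lt_trans; [|apply (Rplus_lt_compat _ _ _ _ H1' H2')].
  eapply Rle_trans; [|apply Cmod_tri]. right. f_equal.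
  rewrite !Csub_parts. unfold Cadd, Re, Im. simpl. f_equal; ring.
Qed.

Lemma ccont_comp (g : R -> Cpx) (c : R -> R) t :
  continuity_pt c t -> ccont g (c t) -> ccont (fun u => g (c u)) t.
Proof.
  intros Hc H eps Heps. destruct (H eps Heps) as [d [Hd H']].
  destruct (cont_pt_elim _ _ Hc d Hd) as [d' [Hd' H'']].
  exists d'. split; [exact Hd'|]. intros x Hx. apply H'. apply H''. exact Hx.
Qed.

Lemma cont_of_deriv f x l : derivable_pt_lim f x l -> continuity_pt f x.
Proof. intros H. apply derivable_continuous_pt. exists l. exact H. Qed.

Lemma mono_le (F dF : R -> R) a b : a <= b ->
  (forall x, a < x < b -> derivable_pt_lim F x (dF x)) ->
  (forall x, a < x < b -> dF x <= 0) ->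
  (forall x, a <= x <= b -> continuity_pt F x) -> F b <= F a.
Proof.
  intros Hab Hd Hn Hc. destruct (Req_dec a b) as [<-|Hne]; [lra|].
  assert (pr1 : forall c, a < c < b -> derivable_pt F c).
  { intros c Hc'. exists (dF c). apply Hd; auto. }
  assert (pr2 : forall c, a < c < b -> derivable_pt id c).
  { intros c _. apply derivable_pt_id. }
  destruct (MVT F id a b pr1 pr2) as [c [P HP]]; try lra; auto.
  { intros. apply derivable_continuous_pt, derivable_pt_id. }
  rewrite (derive_pt_eq_0 F c (dF c) (pr1 c P) (Hd c P)) in HP.
  rewrite (derive_pt_eq_0 id c 1 (pr2 c P) (derivable_pt_lim_id c)) in HP.
  unfold id in HP. specialize (Hn c P). nra.
Qed.

Lemma mono_ge (F dF : R -> R) a b : a <= b ->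
  (forall x, a < x < b -> derivable_pt_lim F x (dF x)) ->
  (forall x, a < x < b -> 0 <= dF x) ->
  (forall x, a <= x <= b -> continuity_pt F x) -> F a <= F b.
Proof.
  intros Hab Hd Hn Hc.
  assert (H := mono_le (fun x => - F x) (fun x => - dF x) a b Hab).
  cut (- F b <= - F a); [lra|]. apply H.
  - intros. apply derivable_pt_lim_opp. auto.
  - intros. specialize (Hn x H0). lra.
  - intros. apply continuity_pt_opp. auto.
Qed.

Lemma dl_scal a f x l : derivable_pt_lim f x l -> derivable_pt_lim (fun y => a * f y) x (a * l).
Proof. intros H. change (derivable_pt_lim (mult_real_fct a f) x (a * l)). apply derivable_pt_lim_scal. exact H. Qed.
Lemma dl_lin a x : derivable_pt_lim (fun y => a * y) x a.
Proof. pose proof (dl_scal a (fun y => y) x 1 (derivable_pt_lim_id x)) as H. rewrite Rmult_1_r in H. exact H. Qed.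
Lemma dl_const a x : derivable_pt_lim (fun _ => a) x 0.
Proof. apply derivable_pt_lim_const. Qed.
Lemma dl_plus f g x l1 l2 : derivable_pt_lim f x l1 -> derivable_pt_lim g x l2 ->
  derivable_pt_lim (fun y => f y + g y) x (l1 + l2).
Proof. apply derivable_pt_lim_plus. Qed.
Lemma dl_minus f g x l1 l2 : derivable_pt_lim f x l1 -> derivable_pt_lim g x l2 ->
  derivable_pt_lim (fun y => f y - g y) x (l1 - l2).
Proof. apply derivable_pt_lim_minus. Qed.
Lemma dl_mult f g x l1 l2 : derivable_pt_lim f x l1 -> derivable_pt_lim g x l2 ->
  derivable_pt_lim (fun y => f y * g y) x (l1 * g x + f x * l2).
Proof. apply derivable_pt_lim_mult. Qed.
Lemma dl_exp_lin a x : derivable_pt_lim (fun y => exp (a * y)) x (exp (a * x) * a).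
Proof. apply (derivable_pt_lim_comp (fun y => a * y) exp). apply dl_lin. apply derivable_pt_lim_exp. Qed.

Lemma ftc (g : R -> R) : (forall x, continuity_pt g x) ->
  forall x, derivable_pt_lim (fun u => RInt g 0 u) x (g x).
Proof.
  intros Hg x. apply is_derive_Reals. apply (is_derive_RInt g (RInt g 0) 0 x).
  - apply filter_forall. intros y. apply (RInt_correct (V:=R_CompleteNormedModule)).
    apply ex_RInt_continuous. intros z _. apply continuity_pt_filterlim. apply Hg.
  - apply continuity_pt_filterlim. apply Hg.
Qed.

Lemma int_bound (g H h : R -> R) X : 0 <= X -> (forall x, continuity_pt g x) ->
  (forall x, 0 <= x <= X -> derivable_pt_lim H x (h x)) ->
  (forall x, 0 <= x <= X -> Rabs (g x) <= h x) ->
  Rabs (RInt g 0 X) <= H X - H 0.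
Proof.
  intros HX Hg HH Hb.
  assert (R0 : RInt g 0 0 = 0) by (apply (RInt_point (V:=R_CompleteNormedModule))).
  assert (A1 : RInt g 0 X - H X <= RInt g 0 0 - H 0).
  { apply (mono_le (fun u => RInt g 0 u - H u) (fun u => g u - h u)); auto.
    - intros. apply derivable_pt_lim_minus. apply ftc; auto. apply HH; lra.
    - intros. specialize (Hb x ltac:(lra)). apply Rabs_le_between in Hb. lra.
    - intros. apply continuity_pt_minus. eapply cont_of_deriv. apply ftc; auto.
      eapply cont_of_deriv. apply HH; auto. }
  assert (A2 : - RInt g 0 X - H X <= - RInt g 0 0 - H 0).
  { apply (mono_le (fun u => - RInt g 0 u - H u) (fun u => - g u - h u)); auto.
    - intros. apply derivable_pt_lim_minus. apply derivable_pt_lim_opp. apply ftc; auto. apply HH; lra.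
    - intros. specialize (Hb x ltac:(lra)). apply Rabs_le_between in Hb. lra.
    - intros. apply continuity_pt_minus. apply continuity_pt_opp. eapply cont_of_deriv. apply ftc; auto.
      eapply cont_of_deriv. apply HH; auto. }
  rewrite R0 in A1, A2. apply Rabs_le. lra.
Qed.

Lemma pow2_ge n : INR n <= 2 ^ n.
Proof.
  induction n. simpl. lra. rewrite S_INR. simpl.
  destruct n. simpl. lra. rewrite S_INR in *. pose proof (pos_INR n). lra.
Qed.
Lemma pow2_pos n : 0 < 2 ^ n.
Proof. apply pow_lt. lra. Qed.

Lemma pow2_big c eps : 0 < eps -> exists n, c / 2 ^ n < eps.
Proof.
  intros He. destruct (INR_unbounded (c / eps)) as [n Hn]. exists n.
  pose proof (pow2_ge n). pose proof (pow2_pos n).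
  assert (c < eps * INR n).
  { apply (Rmult_lt_compat_r eps) in Hn; auto. unfold Rdiv in Hn. rewrite Rmult_assoc, Rinv_l in Hn; lra. }
  apply Rmult_lt_reg_r with (2 ^ n); auto. unfold Rdiv. rewrite Rmult_assoc, Rinv_l; [|lra].
  rewrite Rmult_1_r. nra.
Qed.

Lemma zero_of_small x c : 0 <= x -> (forall n, x <= c / 2 ^ n) -> x = 0.
Proof.
  intros H0 H. destruct (Req_dec x 0); auto. exfalso.
  destruct (pow2_big c x) as [n Hn]; [lra|]. specialize (H n). lra.
Qed.

Lemma seq_lim (a : nat -> R) c : 0 <= c ->
  (forall n m, (n <= m)%nat -> Rabs (a m - a n) <= c / 2 ^ n) ->
  forall n, Rabs (Lim_seq a - a n) <= c / 2 ^ n.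
Proof.
  intros Hc H.
  assert (Hdec : forall n m, (n <= m)%nat -> c / 2 ^ m <= c / 2 ^ n).
  { intros n m Hnm. unfold Rdiv. apply Rmult_le_compat_l; auto.
    apply Rinv_le_contravar. apply pow2_pos. apply Rle_pow; [lra|lia]. }
  assert (Hex : ex_finite_lim_seq a).
  { apply ex_lim_seq_cauchy_corr. intros eps.
    destruct (pow2_big c eps) as [N HN]. apply cond_pos.
    exists N. intros n m Hn Hm. destruct (Nat.le_ge_cases n m).
    - rewrite Rabs_minus_sym. eapply Rle_lt_trans. apply H; auto.
      eapply Rle_lt_trans. apply Hdec; eauto. auto.
    - eapply Rle_lt_trans. apply H; auto.
      eapply Rle_lt_trans. apply Hdec; eauto. auto. }
  apply Lim_seq_correct' in Hex. apply is_lim_seq_Reals in Hex.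
  intros n. apply Rnot_lt_le. intros Hlt.
  set (e := Rabs (Lim_seq a - a n) - c / 2 ^ n).
  destruct (Hex e) as [N HN]. unfold e; lra.
  specialize (HN (max N n) (Nat.le_max_l _ _)). unfold Rdist in HN.
  specialize (H n (max N n) (Nat.le_max_r _ _)).
  pose proof (Rabs_triang (a (max N n) - a n) (Lim_seq a - a (max N n))).
  replace (a (max N n) - a n + (Lim_seq a - a (max N n))) with (Lim_seq a - a n) in H0 by ring.
  rewrite Rabs_minus_sym in HN. unfold e in HN. lra.
Qed.

Section Picard.
Variables (b : R) (w0 : Cpx) (Q : Cpx -> Cpx) (L KD : R) (D : R -> Cpx).
Hypothesis hb : 0 < b.
Hypothesis hL : 0 < L.
Hypothesis HQ : forall z w, Cmod (Csub (Q z) (Q w)) <= L * Cmod (Csub z w).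
Hypothesis HDc : forall t, ccont D t.
Hypothesis HDb : forall t, Cmod (D t) <= KD.

Definition cl (t : R) := Rmax 0 (Rmin t b).
Lemma cl_range t : 0 <= cl t <= b.
Proof. unfold cl. split. apply Rmax_l. apply Rmax_lub. lra. apply Rmin_r. Qed.
Lemma cl_id t : 0 <= t <= b -> cl t = t.
Proof. intros. unfold cl. rewrite Rmin_left by lra. rewrite Rmax_right by lra. auto. Qed.
Lemma cl_lip x y : Rabs (cl x - cl y) <= Rabs (x - y).
Proof.
  unfold cl, Rmax, Rmin. repeat destruct Rle_dec; unfold Rabs; repeat destruct Rcase_abs; lra.
Qed.
Lemma cl_cont t : continuity_pt cl t.
Proof.
  apply cont_pt_intro. intros eps He. exists eps. split; auto. intros x Hx.
  eapply Rle_lt_trans. apply cl_lip. auto.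
Qed.

Definition phi (g : R -> Cpx) t := Cadd (Q (g (cl t))) (D t).
Definition integ (g : R -> Cpx) u : Cpx :=
  (RInt (fun t => Re (phi g t)) 0 u, RInt (fun t => Im (phi g t)) 0 u).
Fixpoint pic n : R -> Cpx :=
  match n with O => fun _ => w0 | S m => fun u => Cadd w0 (integ (pic m) (cl u)) end.

Lemma ccont_const c t : ccont (fun _ => c) t.
Proof.
  intros eps He. exists 1. split. lra. intros. rewrite Csub_parts.
  replace (Re c - Re c, Im c - Im c) with (RtoC 0) by (unfold RtoC; f_equal; ring).
  rewrite Cmod_RtoC, Rabs_R0. auto.
Qed.

Lemma phi_cont g : (forall t, ccont g t) -> forall t, ccont (phi g) t.
Proof.
  intros Hg t. unfold phi. apply ccont_add; auto.
  apply (ccont_lip Q L (fun u => g (cl u))); auto. apply ccont_comp; auto. apply cl_cont.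
Qed.

Lemma RInt_cl_cont (f : R -> R) : (forall x, continuity_pt f x) ->
  forall u, continuity_pt (fun u => RInt f 0 (cl u)) u.
Proof.
  intros Hf u. change (continuity_pt (comp (fun v => RInt f 0 v) cl) u).
  apply continuity_pt_comp. apply cl_cont. eapply cont_of_deriv. apply ftc. auto.
Qed.

Lemma integ_cont g : (forall t, ccont g t) -> forall u, ccont (fun u => integ g (cl u)) u.
Proof.
  intros Hg u. apply ccont_of_parts.
  - apply (RInt_cl_cont (fun t => Re (phi g t))). intros. apply ccont_Re. apply phi_cont; auto.
  - apply (RInt_cl_cont (fun t => Im (phi g t))). intros. apply ccont_Im. apply phi_cont; auto.
Qed.

Lemma pic_cont n : forall t, ccont (pic n) t.
Proof.
  induction n; intros t; simpl. apply ccont_const.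
  apply ccont_add. apply ccont_const. apply integ_cont. auto.
Qed.

Lemma RInt_minusR (f1 f2 : R -> R) u : (forall x, continuity_pt f1 x) -> (forall x, continuity_pt f2 x) ->
  RInt f1 0 u - RInt f2 0 u = RInt (fun t => f1 t - f2 t) 0 u.
Proof.
  intros H1 H2. symmetry. apply (RInt_minus (V:=R_CompleteNormedModule));
  apply ex_RInt_continuous; intros; apply continuity_pt_filterlim; auto.
Qed.

Lemma integ_diff g1 g2 u (H h : R -> R) : 0 <= u <= b -> (forall t, ccont g1 t) -> (forall t, ccont g2 t) ->
  (forall x, 0 <= x <= u -> derivable_pt_lim H x (h x)) ->
  (forall x, 0 <= x <= u -> L * Cmod (Csub (g1 x) (g2 x)) <= h x) ->
  Cmod (Csub (integ g1 u) (integ g2 u)) <= 2 * (H u - H 0).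
Proof.
  intros Hu H1 H2 HH Hh. eapply Rle_trans. apply Cmod_le_sum.
  rewrite Csub_parts. unfold integ. cbn [Re Im fst snd].
  assert (Key : forall x, 0 <= x <= u ->
    Rabs (Re (phi g1 x) - Re (phi g2 x)) <= h x /\ Rabs (Im (phi g1 x) - Im (phi g2 x)) <= h x).
  { intros x Hx. specialize (Hh x Hx).
    assert (E : Cmod (Csub (Q (g1 x)) (Q (g2 x))) <= h x).
    { eapply Rle_trans; [apply HQ|]. auto. }
    assert (ER : Re (phi g1 x) - Re (phi g2 x) = Re (Csub (Q (g1 x)) (Q (g2 x)))).
    { unfold phi. rewrite cl_id by lra. rewrite Csub_parts. unfold Cadd, Re. simpl. ring. }
    assert (EI : Im (phi g1 x) - Im (phi g2 x) = Im (Csub (Q (g1 x)) (Q (g2 x)))).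
    { unfold phi. rewrite cl_id by lra. rewrite Csub_parts. unfold Cadd, Im. simpl. ring. }
    rewrite ER, EI. split; (eapply Rle_trans; [first [apply Re_le|apply Im_le] | exact E]). }
  rewrite (RInt_minusR (fun t => Re (phi g1 t)) (fun t => Re (phi g2 t))).
  rewrite (RInt_minusR (fun t => Im (phi g1 t)) (fun t => Im (phi g2 t))).
  - assert (A1 := int_bound (fun t => Re (phi g1 t) - Re (phi g2 t)) H h u ltac:(lra)).
    assert (A2 := int_bound (fun t => Im (phi g1 t) - Im (phi g2 t)) H h u ltac:(lra)).
    assert (A1' : Rabs (RInt (fun t => Re (phi g1 t) - Re (phi g2 t)) 0 u) <= H u - H 0).
    { apply A1; auto. intros. apply continuity_pt_minus; apply ccont_Re, phi_cont; auto.
      intros. apply Key; auto. }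
    assert (A2' : Rabs (RInt (fun t => Im (phi g1 t) - Im (phi g2 t)) 0 u) <= H u - H 0).
    { apply A2; auto. intros. apply continuity_pt_minus; apply ccont_Im, phi_cont; auto.
      intros. apply Key; auto. }
    lra.
  all: intros; first [apply ccont_Re | apply ccont_Im]; apply phi_cont; auto.
Qed.

Lemma integ_bound g u (H h : R -> R) : 0 <= u <= b -> (forall t, ccont g t) ->
  (forall x, 0 <= x <= u -> derivable_pt_lim H x (h x)) ->
  (forall x, 0 <= x <= u -> Cmod (phi g x) <= h x) ->
  Cmod (integ g u) <= 2 * (H u - H 0).
Proof.
  intros Hu Hg HH Hh. eapply Rle_trans. apply Cmod_le_sum. unfold integ. cbn [Re Im fst snd].
  assert (A1 := int_bound (fun t => Re (phi g t)) H h u ltac:(lra)).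
  assert (A2 := int_bound (fun t => Im (phi g t)) H h u ltac:(lra)).
  assert (A1' : Rabs (RInt (fun t => Re (phi g t)) 0 u) <= H u - H 0).
  { apply A1; auto. intros. apply ccont_Re, phi_cont; auto.
    intros. eapply Rle_trans. apply Re_le. auto. }
  assert (A2' : Rabs (RInt (fun t => Im (phi g t)) 0 u) <= H u - H 0).
  { apply A2; auto. intros. apply ccont_Im, phi_cont; auto.
    intros. eapply Rle_trans. apply Im_le. auto. }
  exact (Rplus_le_compat _ _ _ _ A1' A2') || (cbn [Re Im fst snd] in *; lra).
Qed.

Lemma Csub_Cadd_l w x y : Csub (Cadd w x) (Cadd w y) = Csub x y.
Proof. rewrite !Csub_parts. unfold Cadd, Re, Im. simpl. f_equal; ring. Qed.
Lemma Csub_Cadd_0 w x : Csub (Cadd w x) w = x.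
Proof. rewrite !Csub_parts. unfold Cadd, Re, Im. simpl. destruct x; simpl; f_equal; ring. Qed.

Definition AA := 2 * b * (Cmod (Q w0) + KD) + 1.
Definition BB := AA * exp (4 * L * b).

Lemma KD_nonneg : 0 <= KD.
Proof. eapply Rle_trans. apply Cmod_ge0. apply (HDb 0). Qed.

Lemma pic_step n u : Cmod (Csub (pic (S n) u) (pic n u)) <= AA * exp (4 * L * cl u) / 2 ^ n.
Proof.
  revert u. induction n; intros u.
  - simpl pic. rewrite Csub_Cadd_0. pose proof (cl_range u).
    eapply Rle_trans. apply (integ_bound (fun _ => w0) (cl u) (fun x => (Cmod (Q w0) + KD) * x) (fun _ => Cmod (Q w0) + KD)); auto.
    + intros. apply ccont_const.
    + intros. apply dl_lin.
    + intros. unfold phi. eapply Rle_trans. apply Cmod_tri. pose proof (HDb x). lra.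
    + pose proof (Cmod_ge0 (Q w0)). pose proof KD_nonneg.
      assert (1 <= exp (4 * L * cl u)). { pose proof (exp_ineq1_le (4 * L * cl u)). pose proof (cl_range u). nra. }
      unfold AA. simpl. unfold Rdiv. rewrite Rinv_1. rewrite Rmult_1_r. apply Rle_trans with (2 * b * (Cmod (Q w0) + KD) + 1); [nra|]. rewrite <- (Rmult_1_r (2 * b * (Cmod (Q w0) + KD) + 1)) at 1. apply Rmult_le_compat_l; nra.
  - change (pic (S (S n)) u) with (Cadd w0 (integ (pic (S n)) (cl u))).
    change (pic (S n) u) with (Cadd w0 (integ (pic n) (cl u))).
    rewrite Csub_Cadd_l. pose proof (cl_range u).
    eapply Rle_trans.
    apply (integ_diff (pic (S n)) (pic n) (cl u) (fun x => AA * exp (4 * L * x) / (4 * 2 ^ n))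
             (fun x => L * (AA * exp (4 * L * x) / 2 ^ n))); auto.
    + apply pic_cont.
    + apply pic_cont.
    + intros x _. pose proof (pow2_pos n).
      replace (L * (AA * exp (4 * L * x) / 2 ^ n)) with ((AA / (4 * 2^n)) * (exp (4 * L * x) * (4 * L))) by (field; lra).
      replace (fun x0 => AA * exp (4 * L * x0) / (4 * 2 ^ n)) with (fun x0 => (AA / (4 * 2^n)) * exp (4 * L * x0))
        by (apply functional_extensionality; intros; field; lra).
      apply dl_scal. apply dl_exp_lin.
    + intros x Hx. specialize (IHn x). rewrite cl_id in IHn by lra. apply Rmult_le_compat_l; lra.
    + pose proof (pow2_pos n). pose proof (exp_pos (4 * L * 0)). 
      assert (0 < AA). { unfold AA. pose proof (Cmod_ge0 (Q w0)). pose proof KD_nonneg. nra. }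
      simpl pow. pose proof (exp_pos (4 * L * cl u)).
      assert (0 <= AA * exp (4 * L * 0) / (4 * 2 ^ n)). { apply Rlt_le. apply Rdiv_lt_0_compat; nra. }
      apply Rle_trans with (2 * (AA * exp (4 * L * cl u) / (4 * 2 ^ n))). lra.
      right. field. lra.
Qed.

Lemma AA_pos : 0 < AA.
Proof. unfold AA. pose proof (Cmod_ge0 (Q w0)). pose proof KD_nonneg. nra. Qed.
Lemma BB_pos : 0 < BB.
Proof. unfold BB. pose proof AA_pos. pose proof (exp_pos (4 * L * b)). nra. Qed.

Lemma pic_step' n u : Cmod (Csub (pic (S n) u) (pic n u)) <= BB / 2 ^ n.
Proof.
  eapply Rle_trans. apply pic_step. unfold BB, Rdiv. apply Rmult_le_compat_r.
  left. apply Rinv_0_lt_compat, pow2_pos.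
  apply Rmult_le_compat_l. left; apply AA_pos.
  destruct (Req_dec (cl u) b) as [->|]. lra. left. apply exp_increasing.
  pose proof (cl_range u). apply Rmult_lt_compat_l; lra.
Qed.

Lemma Csub_tri x y z : Cmod (Csub x z) <= Cmod (Csub x y) + Cmod (Csub y z).
Proof.
  eapply Rle_trans; [|apply Cmod_tri]. right. f_equal. rewrite !Csub_parts. unfold Cadd, Re, Im; simpl. f_equal; ring.
Qed.

Lemma pic_cauchy n k u : Cmod (Csub (pic (n + k) u) (pic n u)) <= 2 * BB / 2 ^ n - 2 * BB / 2 ^ (n + k).
Proof.
  induction k.
  - rewrite Nat.add_0_r. rewrite Csub_parts.
    replace (Re (pic n u) - Re (pic n u), Im (pic n u) - Im (pic n u)) with (RtoC 0) by (unfold RtoC; f_equal; ring).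
    rewrite Cmod_RtoC, Rabs_R0. lra.
  - eapply Rle_trans. apply (Csub_tri _ (pic (n + k) u)).
    replace (n + S k)%nat with (S (n + k)) by lia.
    pose proof (pic_step' (n + k) u). simpl pow. pose proof (pow2_pos (n + k)).
    replace (2 * BB / (2 * 2 ^ (n + k))) with (BB / 2 ^ (n + k)) by (field; lra).
    replace (2 * BB / 2 ^ (n + k)) with (2 * (BB / 2 ^ (n + k))) in IHk by (field; lra).
    lra.
Qed.

Lemma pic_cauchy' n m u : (n <= m)%nat -> Cmod (Csub (pic m u) (pic n u)) <= 2 * BB / 2 ^ n.
Proof.
  intros Hnm. replace m with (n + (m - n))%nat by lia. eapply Rle_trans. apply pic_cauchy.
  pose proof (pow2_pos (n + (m - n))). pose proof BB_pos.
  assert (0 <= 2 * BB / 2 ^ (n + (m - n))) by (apply Rlt_le, Rdiv_lt_0_compat; lra). lra.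
Qed.

Definition flim u : Cpx := (real (Lim_seq (fun n => Re (pic n u))), real (Lim_seq (fun n => Im (pic n u)))).

Lemma flim_close n u : Cmod (Csub (flim u) (pic n u)) <= 4 * BB / 2 ^ n.
Proof.
  pose proof BB_pos.
  assert (H1 := seq_lim (fun n => Re (pic n u)) (2 * BB) ltac:(lra)).
  assert (H2 := seq_lim (fun n => Im (pic n u)) (2 * BB) ltac:(lra)).
  eapply Rle_trans. apply Cmod_le_sum. rewrite Csub_parts. unfold flim. cbn [Re Im fst snd].
  assert (A1 : Rabs (Lim_seq (fun n0 => Re (pic n0 u)) - Re (pic n u)) <= 2 * BB / 2 ^ n).
  { apply H1. intros n0 m Hnm. eapply Rle_trans; [|apply (pic_cauchy' n0 m u Hnm)].
    pose proof (Re_le (Csub (pic m u) (pic n0 u))). rewrite Csub_parts in *. cbn [Re Im fst snd] in *. lra. }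
  assert (A2 : Rabs (Lim_seq (fun n0 => Im (pic n0 u)) - Im (pic n u)) <= 2 * BB / 2 ^ n).
  { apply H2. intros n0 m Hnm. eapply Rle_trans; [|apply (pic_cauchy' n0 m u Hnm)].
    pose proof (Im_le (Csub (pic m u) (pic n0 u))). rewrite Csub_parts in *. cbn [Re Im fst snd] in *. lra. }
  cbn [Re Im fst snd] in *. unfold Rdiv in *. lra.
Qed.

Lemma flim_cont t : ccont flim t.
Proof.
  intros eps He. destruct (pow2_big (4 * BB) (eps / 3)) as [n Hn]. lra.
  destruct (pic_cont n t (eps / 3)) as [d [Hd Hd']]. lra.
  exists d. split; auto. intros t' Ht'.
  eapply Rle_lt_trans. apply (Csub_tri _ (pic n t')).
  eapply Rle_lt_trans. apply Rplus_le_compat_l. apply (Csub_tri _ (pic n t)).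
  pose proof (flim_close n t'). pose proof (flim_close n t). specialize (Hd' t' Ht').
  assert (Cmod (Csub (pic n t) (flim t)) = Cmod (Csub (flim t) (pic n t))).
  { rewrite !Csub_parts. unfold Cmod, Re, Im. simpl. f_equal. ring. }
  lra.
Qed.

Lemma flim_fix u : 0 <= u <= b -> Cadd w0 (integ flim u) = flim u.
Proof.
  intros Hu.
  assert (Hz : Cmod (Csub (Cadd w0 (integ flim u)) (flim u)) = 0).
  { apply (zero_of_small _ (8 * L * BB * b + 2 * BB)). apply Cmod_ge0. intros n.
    eapply Rle_trans. apply (Csub_tri _ (pic (S n) u)).
    assert (E1 : Cmod (Csub (Cadd w0 (integ flim u)) (pic (S n) u)) <= 8 * L * BB * b / 2 ^ n).
    { simpl pic. rewrite cl_id by auto. rewrite Csub_Cadd_l.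
      eapply Rle_trans. apply (integ_diff flim (pic n) u (fun x => L * (4 * BB / 2 ^ n) * x) (fun _ => L * (4 * BB / 2 ^ n))); auto.
      - apply flim_cont.
      - apply pic_cont.
      - intros. apply dl_lin.
      - intros. apply Rmult_le_compat_l. lra. apply flim_close.
      - pose proof (pow2_pos n). pose proof BB_pos.
        apply Rle_trans with (2 * (L * (4 * BB / 2 ^ n) * b)).
        + apply Rmult_le_compat_l. lra. rewrite Rmult_0_r, Rminus_0_r. apply Rmult_le_compat_l; try lra.
          apply Rmult_le_pos. lra. apply Rlt_le, Rdiv_lt_0_compat; lra.
        + right. field. lra. }
    assert (E2 : Cmod (Csub (pic (S n) u) (flim u)) <= 2 * BB / 2 ^ n).
    { assert (Cmod (Csub (pic (S n) u) (flim u)) = Cmod (Csub (flim u) (pic (S n) u))).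
      { rewrite !Csub_parts. unfold Cmod, Re, Im. simpl. f_equal. ring. }
      rewrite H. eapply Rle_trans. apply flim_close. simpl pow. pose proof (pow2_pos n).
      right. field. lra. }
    pose proof (pow2_pos n).
    replace ((8 * L * BB * b + 2 * BB) / 2 ^ n) with (8 * L * BB * b / 2 ^ n + 2 * BB / 2 ^ n) by (field; lra).
    lra. }
  revert Hz. generalize (Cadd w0 (integ flim u)) (flim u). intros [p q] [p' q'] Hz.
  apply Cmod_eq0 in Hz. rewrite Csub_parts in Hz. unfold RtoC, Re, Im in Hz. simpl in Hz.
  injection Hz; intros. f_equal; lra.
Qed.

Theorem picard_exists : exists F : R -> Cpx,
  F 0 = w0 /\ (forall t, ccont F t) /\
  forall u, 0 <= u <= b -> has_deriv_within F 0 b u (Cadd (Q (F u)) (D u)).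
Proof.
  exists (fun u => Cadd w0 (integ flim u)). split; [|split].
  - unfold integ. rewrite !(RInt_point (V:=R_CompleteNormedModule)). destruct w0. unfold Cadd, Re, Im. simpl. f_equal; apply Rplus_0_r.
  - intros t. apply ccont_add. apply ccont_const. apply ccont_of_parts.
    + eapply cont_of_deriv. apply ftc. intros. apply ccont_Re. apply phi_cont. apply flim_cont.
    + eapply cont_of_deriv. apply ftc. intros. apply ccont_Im. apply phi_cont. apply flim_cont.
  - intros u Hu.
    assert (E : Cadd (Q (Cadd w0 (integ flim u))) (D u) = (Re (phi flim u), Im (phi flim u))).
    { rewrite flim_fix by auto. unfold phi. rewrite cl_id by auto. destruct (Cadd (Q (flim u)) (D u)); reflexivity. }
    rewrite E. apply hdw_of_comp.
    + assert (Hd := dl_plus (fun _ => Re w0) (fun y => RInt (fun t => Re (phi flim t)) 0 y) u 0 _ (dl_const _ _)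
         (ftc (fun t => Re (phi flim t)) ltac:(intros; apply ccont_Re; apply phi_cont; apply flim_cont) u)).
      rewrite Rplus_0_l in Hd. exact Hd.
    + assert (Hd := dl_plus (fun _ => Im w0) (fun y => RInt (fun t => Im (phi flim t)) 0 y) u 0 _ (dl_const _ _)
         (ftc (fun t => Im (phi flim t)) ltac:(intros; apply ccont_Im; apply phi_cont; apply flim_cont) u)).
      rewrite Rplus_0_l in Hd. exact Hd.
Qed.
End Picard.

Lemma line_pt z0 v t0 t :
  Cadd z0 (Cmul (RtoC (t0 + t)) v) = Cadd (Cadd z0 (Cmul (RtoC t0) v)) (Cmul (RtoC t) v).
Proof. unfold Cadd, Cmul, RtoC, Re, Im; simpl. f_equal; ring. Qed.

Lemma cd_line (h : Cpx -> Cpx) d z0 v t0 :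
  C_has_deriv h (Cadd z0 (Cmul (RtoC t0) v)) d ->
  derivable_pt_lim (fun t => Re (h (Cadd z0 (Cmul (RtoC t) v)))) t0 (Re (Cmul d v)) /\
  derivable_pt_lim (fun t => Im (h (Cadd z0 (Cmul (RtoC t) v)))) t0 (Im (Cmul d v)).
Proof.
  intros H. set (w := Cadd z0 (Cmul (RtoC t0) v)) in *.
  pose proof (Cmod_ge0 v) as Hv.
  split; intros eps Heps;
  destruct (H (eps / (2 * (Cmod v + 1)))) as [r [Hr Hr']];
  try (apply Rdiv_lt_0_compat; lra);
  assert (Hd : 0 < r / (Cmod v + 1)) by (apply Rdiv_lt_0_compat; lra);
  exists (mkposreal _ Hd); intros t Ht0 Ht; simpl in Ht;
  rewrite line_pt; fold w;
  assert (Hm : Cmod (Cmul (RtoC t) v) < r)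
    by (rewrite Cmod_mul, Cmod_RtoC; apply Rmult_lt_reg_r with (/ (Cmod v + 1));
        [apply Rinv_0_lt_compat; lra|]; unfold Rdiv in Ht;
        apply Rle_lt_trans with (Rabs t); [|exact Ht];
        rewrite Rmult_assoc; rewrite <- (Rmult_1_r (Rabs t)) at 2; apply Rmult_le_compat_l; [apply Rabs_pos|];
        apply (Rmult_le_reg_r (Cmod v + 1)); [lra|]; rewrite Rmult_assoc, Rinv_l; lra);
  specialize (Hr' _ Hm); rewrite Cmod_mul, Cmod_RtoC in Hr';
  assert (Hp : 0 < Rabs t) by (apply Rabs_pos_lt; auto).
  - pose proof (Re_le (Csub (Csub (h (Cadd w (Cmul (RtoC t) v))) (h w)) (Cmul d (Cmul (RtoC t) v)))) as HR.
    assert (E : Re (Csub (Csub (h (Cadd w (Cmul (RtoC t) v))) (h w)) (Cmul d (Cmul (RtoC t) v)))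
      = t * ((Re (h (Cadd w (Cmul (RtoC t) v))) - Re (h w)) / t - Re (Cmul d v))).
    { rewrite !Csub_parts. unfold Cmul, RtoC, Re, Im; simpl. field. auto. }
    rewrite E, Rabs_mult in HR.
    assert (Hq : eps / (2 * (Cmod v + 1)) * (Rabs t * Cmod v) < eps * Rabs t).
    { unfold Rdiv. rewrite Rinv_mult. 
      assert (0 < / (Cmod v + 1)) by (apply Rinv_0_lt_compat; lra).
      assert (/ (Cmod v + 1) * Cmod v < 1). { apply (Rmult_lt_reg_l (Cmod v + 1)); [lra|].
         rewrite <- Rmult_assoc, Rinv_r; lra. }
      replace (eps * (/2 * /(Cmod v+1)) * (Rabs t * Cmod v)) with ((eps * Rabs t) * (/2 * (/(Cmod v + 1) * Cmod v))) by ring.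
      rewrite <- (Rmult_1_r (eps * Rabs t)) at 2. apply Rmult_lt_compat_l; [nra|lra]. }
    nra.
  - pose proof (Im_le (Csub (Csub (h (Cadd w (Cmul (RtoC t) v))) (h w)) (Cmul d (Cmul (RtoC t) v)))) as HR.
    assert (E : Im (Csub (Csub (h (Cadd w (Cmul (RtoC t) v))) (h w)) (Cmul d (Cmul (RtoC t) v)))
      = t * ((Im (h (Cadd w (Cmul (RtoC t) v))) - Im (h w)) / t - Im (Cmul d v))).
    { rewrite !Csub_parts. unfold Cmul, RtoC, Re, Im; simpl. field. auto. }
    rewrite E, Rabs_mult in HR.
    assert (Hq : eps / (2 * (Cmod v + 1)) * (Rabs t * Cmod v) < eps * Rabs t).
    { unfold Rdiv. rewrite Rinv_mult. 
      assert (0 < / (Cmod v + 1)) by (apply Rinv_0_lt_compat; lra).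
      assert (/ (Cmod v + 1) * Cmod v < 1). { apply (Rmult_lt_reg_l (Cmod v + 1)); [lra|].
         rewrite <- Rmult_assoc, Rinv_r; lra. }
      replace (eps * (/2 * /(Cmod v+1)) * (Rabs t * Cmod v)) with ((eps * Rabs t) * (/2 * (/(Cmod v + 1) * Cmod v))) by ring.
      rewrite <- (Rmult_1_r (eps * Rabs t)) at 2. apply Rmult_lt_compat_l; [nra|lra]. }
    nra.
Qed.

Definition segpt z0 z1 t := Cadd z0 (Cmul (RtoC t) (Csub z1 z0)).
Lemma segpt0 z0 z1 : segpt z0 z1 0 = z0.
Proof. unfold segpt, Cadd, Cmul, Csub, Copp, RtoC, Re, Im; simpl. destruct z0; simpl; f_equal; ring. Qed.
Lemma segpt1 z0 z1 : segpt z0 z1 1 = z1.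
Proof. unfold segpt, Cadd, Cmul, Csub, Copp, RtoC, Re, Im; simpl. destruct z1; simpl; f_equal; ring. Qed.

Lemma seg_bound (h dh : Cpx -> Cpx) z0 z1 K :
  (forall t, 0 <= t <= 1 -> C_has_deriv h (segpt z0 z1 t) (dh (segpt z0 z1 t)) /\ Cmod (dh (segpt z0 z1 t)) <= K) ->
  Rabs (Re (h z1) - Re (h z0)) <= K * Cmod (Csub z1 z0) /\
  Rabs (Im (h z1) - Im (h z0)) <= K * Cmod (Csub z1 z0).
Proof.
  intros H. set (v := Csub z1 z0).
  assert (Hd : forall t, 0 <= t <= 1 ->
    derivable_pt_lim (fun t => Re (h (segpt z0 z1 t))) t (Re (Cmul (dh (segpt z0 z1 t)) v)) /\
    derivable_pt_lim (fun t => Im (h (segpt z0 z1 t))) t (Im (Cmul (dh (segpt z0 z1 t)) v))).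
  { intros t Ht. apply cd_line. apply H; auto. }
  assert (Hb : forall t, 0 <= t <= 1 -> Rabs (Re (Cmul (dh (segpt z0 z1 t)) v)) <= K * Cmod v /\
                                       Rabs (Im (Cmul (dh (segpt z0 z1 t)) v)) <= K * Cmod v).
  { intros t Ht. destruct (H t Ht) as [_ HK]. pose proof (Cmod_ge0 v).
    split; [eapply Rle_trans; [apply Re_le|]|eapply Rle_trans; [apply Im_le|]];
    rewrite Cmod_mul; apply Rmult_le_compat_r; auto. }
  replace (h z1) with (h (segpt z0 z1 1)) by (now rewrite segpt1). replace (h z0) with (h (segpt z0 z1 0)) by (now rewrite segpt0).
  split; apply Rabs_le; split.
  - assert (M1 := mono_ge (fun t => Re (h (segpt z0 z1 t)) + K * Cmod v * t) (fun t => Re (Cmul (dh (segpt z0 z1 t)) v) + K * Cmod v) 0 1 ltac:(lra)).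
    cut (Re (h (segpt z0 z1 0)) + K * Cmod v * 0 <= Re (h (segpt z0 z1 1)) + K * Cmod v * 1); [lra|].
    apply M1.
    + intros. apply dl_plus. apply Hd; lra. apply dl_lin.
    + intros. destruct (Hb x ltac:(lra)) as [B1 _]. apply Rabs_le_between in B1. lra.
    + intros. eapply cont_of_deriv. apply dl_plus. apply Hd; lra. apply dl_lin.
  - assert (M1 := mono_le (fun t => Re (h (segpt z0 z1 t)) - K * Cmod v * t) (fun t => Re (Cmul (dh (segpt z0 z1 t)) v) - K * Cmod v) 0 1 ltac:(lra)).
    cut (Re (h (segpt z0 z1 1)) - K * Cmod v * 1 <= Re (h (segpt z0 z1 0)) - K * Cmod v * 0); [lra|].
    apply M1.
    + intros. apply dl_minus. apply Hd; lra. apply dl_lin.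
    + intros. destruct (Hb x ltac:(lra)) as [B1 _]. apply Rabs_le_between in B1. lra.
    + intros. eapply cont_of_deriv. apply dl_minus. apply Hd; lra. apply dl_lin.
  - assert (M1 := mono_ge (fun t => Im (h (segpt z0 z1 t)) + K * Cmod v * t) (fun t => Im (Cmul (dh (segpt z0 z1 t)) v) + K * Cmod v) 0 1 ltac:(lra)).
    cut (Im (h (segpt z0 z1 0)) + K * Cmod v * 0 <= Im (h (segpt z0 z1 1)) + K * Cmod v * 1); [lra|].
    apply M1.
    + intros. apply dl_plus. apply Hd; lra. apply dl_lin.
    + intros. destruct (Hb x ltac:(lra)) as [_ B1]. apply Rabs_le_between in B1. lra.
    + intros. eapply cont_of_deriv. apply dl_plus. apply Hd; lra. apply dl_lin.
  - assert (M1 := mono_le (fun t => Im (h (segpt z0 z1 t)) - K * Cmod v * t) (fun t => Im (Cmul (dh (segpt z0 z1 t)) v) - K * Cmod v) 0 1 ltac:(lra)).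
    cut (Im (h (segpt z0 z1 1)) - K * Cmod v * 1 <= Im (h (segpt z0 z1 0)) - K * Cmod v * 0); [lra|].
    apply M1.
    + intros. apply dl_minus. apply Hd; lra. apply dl_lin.
    + intros. destruct (Hb x ltac:(lra)) as [_ B1]. apply Rabs_le_between in B1. lra.
    + intros. eapply cont_of_deriv. apply dl_minus. apply Hd; lra. apply dl_lin.
Qed.

Section Ctx.
Variables (T delta d1 M K : R) (lam dlam ddlam : Cpx -> Cpx) (U : Cpx -> Prop).
Hypothesis hT : 0 < T.
Hypothesis hd1 : 0 < d1.
Hypothesis hd1d : 2 * d1 <= delta.
Hypothesis HU : forall z, Eset T delta z -> U z.
Hypothesis Hl : forall z, U z -> C_has_deriv lam z (dlam z).
Hypothesis Hdl : forall z, U z -> C_has_deriv dlam z (ddlam z).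
Hypothesis Hre : forall t, 0 <= t <= T -> Im (lam (RtoC t)) = 0.
Hypothesis Hhol : forall s t, 0 <= s <= T -> 0 <= t <= T -> s <> t ->
       Cmod (Csub (lam (RtoC t)) (lam (RtoC s))) / sqrt (Rabs (t - s)) <= 1.
Hypothesis HM : forall z, Eset T delta z -> Cmod (dlam z) <= M /\ Cmod (ddlam z) <= M.
Hypothesis hMK : M <= K.

Definition box z := - d1 <= Re z <= T + d1 /\ Rabs (Im z) <= d1.
Definition clT x := Rmax 0 (Rmin x T).
Lemma clT_range x : 0 <= clT x <= T.
Proof. unfold clT. split. apply Rmax_l. apply Rmax_lub. lra. apply Rmin_r. Qed.
Lemma clT_lip x y : Rabs (clT x - clT y) <= Rabs (x - y).
Proof. unfold clT, Rmax, Rmin. repeat destruct Rle_dec; unfold Rabs; repeat destruct Rcase_abs; lra. Qed.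
Lemma clT_near x : - d1 <= x <= T + d1 -> Rabs (x - clT x) <= d1.
Proof. intros. unfold clT, Rmax, Rmin. repeat destruct Rle_dec; unfold Rabs; repeat destruct Rcase_abs; lra. Qed.

Lemma box_near z : box z -> Cmod (Csub z (RtoC (clT (Re z)))) <= 2 * d1.
Proof.
  intros [H1 H2]. eapply Rle_trans. apply Cmod_le_sum. rewrite Csub_parts.
  unfold RtoC at 1 2. cbn [Re Im fst snd]. pose proof (clT_near (Re z) H1). unfold Re, Im in *.
  rewrite Rminus_0_r. lra.
Qed.

Lemma box_E z : box z -> Eset T delta z.
Proof.
  intros Hb. exists (clT (Re z)). split. apply clT_range. pose proof (box_near z Hb). lra.
Qed.

Lemma box_seg z0 z1 t : box z0 -> box z1 -> 0 <= t <= 1 -> box (segpt z0 z1 t).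
Proof.
  intros [A1 A2] [B1 B2] Ht. unfold box, segpt. rewrite Csub_parts. unfold Cadd, Cmul, RtoC.
  unfold Re, Im in *. simpl.
  apply Rabs_le_between in A2. apply Rabs_le_between in B2.
  split. nra. apply Rabs_le. nra.
Qed.

Lemma lam_seg z0 z1 : box z0 -> box z1 -> Rabs (Re (lam z1) - Re (lam z0)) <= K * Cmod (Csub z1 z0).
Proof.
  intros H0 H1. apply (seg_bound lam dlam z0 z1 K). intros t Ht.
  pose proof (box_E _ (box_seg z0 z1 t H0 H1 Ht)). split. apply Hl, HU; auto.
  eapply Rle_trans; [apply HM|]; auto.
Qed.

Lemma dlam_seg z0 z1 : box z0 -> box z1 -> Rabs (Im (dlam z1) - Im (dlam z0)) <= K * Cmod (Csub z1 z0).
Proof.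
  intros H0 H1. apply (seg_bound dlam ddlam z0 z1 K). intros t Ht.
  pose proof (box_E _ (box_seg z0 z1 t H0 H1 Ht)). split. apply Hdl, HU; auto.
  eapply Rle_trans; [apply HM|]; auto.
Qed.

Lemma real_box p : 0 <= p <= T -> box (RtoC p).
Proof. intros. unfold box, RtoC, Re, Im. simpl. rewrite Rabs_R0. lra. Qed.

Lemma dlam_real p : 0 <= p <= T -> Im (dlam (RtoC p)) = 0.
Proof.
  intros Hp. set (d := dlam (RtoC p)).
  destruct (Req_dec (Im d) 0) as [|Hne]; auto. exfalso.
  assert (He : 0 < Rabs (Im d) / 2) by (apply Rabs_pos_lt in Hne; lra).
  destruct (Hl (RtoC p) (HU _ (box_E _ (real_box p Hp))) _ He) as [r [Hr Hr']].
  set (m := Rmin (r/2) (T/2)).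
  assert (Hm : 0 < m) by (apply Rmin_pos; lra).
  assert (Hm1 : m <= r/2) by apply Rmin_l. assert (Hm2 : m <= T/2) by apply Rmin_r.
  set (h := if Rle_dec p (T/2) then m else - m).
  assert (Hh : 0 <= p + h <= T /\ Rabs h = m).
  { unfold h. destruct Rle_dec. split. lra. apply Rabs_right. lra.
    split. lra. rewrite Rabs_Ropp. apply Rabs_right. lra. }
  destruct Hh as [Hph Hah].
  specialize (Hr' (RtoC h)). rewrite Cmod_RtoC, Hah in Hr'.
  specialize (Hr' ltac:(lra)).
  assert (E : Cadd (RtoC p) (RtoC h) = RtoC (p + h)) by (unfold Cadd, RtoC, Re, Im; simpl; f_equal; ring).
  rewrite E in Hr'.
  assert (EI : Im (Csub (Csub (lam (RtoC (p + h))) (lam (RtoC p))) (Cmul d (RtoC h))) = - (Im d * h)).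
  { rewrite !Csub_parts. rewrite (Hre (p+h)) by lra. rewrite (Hre p) by lra.
    unfold Cmul, RtoC, Re, Im; simpl. ring. }
  pose proof (Im_le (Csub (Csub (lam (RtoC (p + h))) (lam (RtoC p))) (Cmul d (RtoC h)))) as HI.
  rewrite EI, Rabs_Ropp, Rabs_mult, Hah in HI.
  fold d in Hr'. apply Rabs_pos_lt in Hne. nra.
Qed.

Lemma hol_Re p q : 0 <= p <= T -> 0 <= q <= T ->
  Rabs (Re (lam (RtoC q)) - Re (lam (RtoC p))) <= sqrt (Rabs (q - p)).
Proof.
  intros Hp Hq. destruct (Req_dec p q) as [<-|Hne].
  - unfold Rminus. rewrite !Rplus_opp_r, Rabs_R0. apply sqrt_pos.
  - specialize (Hhol p q Hp Hq Hne).
    assert (0 < sqrt (Rabs (q - p))). { apply sqrt_lt_R0. apply Rabs_pos_lt. lra. }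
    pose proof (Re_le (Csub (lam (RtoC q)) (lam (RtoC p)))).
    assert (ER : Re (Csub (lam (RtoC q)) (lam (RtoC p))) = Re (lam (RtoC q)) - Re (lam (RtoC p))) by (rewrite Csub_parts; reflexivity).
    rewrite ER in H0.
    unfold Rdiv in Hhol. apply (Rmult_le_compat_r (sqrt (Rabs (q - p)))) in Hhol; [|lra].
    rewrite Rmult_assoc, Rinv_l in Hhol by lra. lra.
Qed.

Lemma dlam_cont z : box z -> forall eps, 0 < eps -> exists r, 0 < r /\
  forall w, Cmod (Csub w z) < r -> Cmod (Csub (dlam w) (dlam z)) < eps.
Proof.
  intros Hb eps He. destruct (Hdl z (HU _ (box_E _ Hb)) 1 ltac:(lra)) as [r [Hr Hr']].
  set (c := Cmod (ddlam z) + 1). assert (Hc : 0 < c) by (unfold c; pose proof (Cmod_ge0 (ddlam z)); lra).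
  exists (Rmin r (eps / (c + 1))). split. apply Rmin_pos; auto. apply Rdiv_lt_0_compat; lra.
  intros w Hw. set (hh := Csub w z).
  assert (Ew : w = Cadd z hh) by (unfold hh; rewrite Csub_parts; unfold Cadd, Re, Im; simpl; destruct w; simpl; f_equal; ring).
  specialize (Hr' hh (Rlt_le_trans _ _ _ Hw (Rmin_l _ _))). rewrite <- Ew in Hr'.
  assert (T1 : Cmod (Csub (dlam w) (dlam z)) <= Cmod (Csub (Csub (dlam w) (dlam z)) (Cmul (ddlam z) hh)) + Cmod (Cmul (ddlam z) hh)).
  { eapply Rle_trans; [|apply Cmod_tri]. right. f_equal. rewrite !Csub_parts. unfold Cadd, Re, Im. simpl. f_equal; ring. }
  rewrite Cmod_mul in T1. pose proof (Cmod_ge0 hh). pose proof (Cmod_ge0 (ddlam z)).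
  assert (Cmod hh < eps / (c + 1)) by (eapply Rlt_le_trans; [exact Hw|apply Rmin_r]).
  assert (Cmod hh * (c + 1) < eps). { apply (Rmult_lt_compat_r (c+1)) in H1; [|lra]. unfold Rdiv in H1. rewrite Rmult_assoc, Rinv_l in H1; lra. }
  unfold c in *. nra.
Qed.
Hypothesis hK1 : 1 <= K.
Hypothesis hd12 : d1 <= 1/2.
Hypothesis hdK : 1600 * K ^ 2 * d1 <= 1.
Hypothesis hdY : 40 * K * (2 * T + 5) * d1 <= 1.
Variable s : Cpx.
Hypothesis hs1 : 0 < Re s < T + d1.
Hypothesis hs2 : Rabs (Im s) < d1.

Definition bb := Re s + d1.
Definition zt t := Csub s (RtoC t).
Definition ell t := Re (lam (zt t)) - Re (lam s).


Lemma zt_parts t : zt t = (Re s - t, Im s).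
Proof. unfold zt. rewrite Csub_parts. unfold RtoC, Re at 2, Im at 2. simpl. f_equal. ring. Qed.

Lemma box_zt t : 0 <= t <= bb -> box (zt t).
Proof. intros Ht. unfold box. rewrite zt_parts. unfold Re at 1 2, Im at 1. simpl. unfold bb in Ht. unfold Re in *. lra. Qed.

Lemma box_s : box s.
Proof. unfold box. lra. Qed.

Lemma B_bound t : 0 <= t <= bb -> Rabs (Im (dlam (zt t))) <= 2 * K * d1.
Proof.
  intros Ht. set (p := clT (Re (zt t))).
  assert (Hp : 0 <= p <= T) by apply clT_range.
  pose proof (dlam_seg (RtoC p) (zt t) (real_box p Hp) (box_zt t Ht)).
  rewrite (dlam_real p Hp) in H.
  rewrite Rminus_0_r in H. eapply Rle_trans. apply H.
  pose proof (box_near _ (box_zt t Ht)). fold p in H0.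
  assert (Cmod (Csub (zt t) (RtoC p)) <= 2 * d1) by auto. nra.
Qed.

Lemma ell_lin t : 0 <= t <= bb -> Rabs (ell t) <= K * t.
Proof.
  intros Ht. unfold ell.
  pose proof (lam_seg s (zt t) box_s (box_zt t Ht)).
  eapply Rle_trans. apply H. right. f_equal. rewrite zt_parts, Csub_parts.
  unfold Cmod. cbn [Re Im fst snd]. rewrite <- (sqrt_pow2 t) at 2 by lra. f_equal. ring.
Qed.

Lemma ell_sqrt t : 0 <= t <= bb -> Rabs (ell t) <= sqrt t + 4 * K * d1.
Proof.
  intros Ht. unfold ell.
  set (pt := clT (Re (zt t))). set (p0 := clT (Re s)).
  assert (Hpt : 0 <= pt <= T) by apply clT_range. assert (Hp0 : 0 <= p0 <= T) by apply clT_range.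
  pose proof (lam_seg (RtoC pt) (zt t) (real_box pt Hpt) (box_zt t Ht)) as H1.
  pose proof (lam_seg (RtoC p0) s (real_box p0 Hp0) box_s) as H2.
  pose proof (hol_Re p0 pt Hp0 Hpt) as H3.
  pose proof (box_near _ (box_zt t Ht)) as N1. fold pt in N1.
  pose proof (box_near _ box_s) as N2. fold p0 in N2.
  assert (Hs : sqrt (Rabs (pt - p0)) <= sqrt t).
  { apply sqrt_le_1_alt. unfold pt, p0. eapply Rle_trans. apply clT_lip. rewrite zt_parts. unfold Re at 1. simpl.
    replace (Re s - t - Re s) with (- t) by ring. rewrite Rabs_Ropp, Rabs_right; lra. }
  assert (T1 : K * Cmod (Csub (zt t) (RtoC pt)) <= K * (2 * d1)) by (apply Rmult_le_compat_l; lra).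
  assert (T2 : K * Cmod (Csub s (RtoC p0)) <= K * (2 * d1)) by (apply Rmult_le_compat_l; lra).
  pose proof (Rabs_triang (Re (lam (zt t)) - Re (lam (RtoC pt))) (Re (lam (RtoC pt)) - Re (lam s))) as H5.
  pose proof (Rabs_triang (Re (lam (RtoC pt)) - Re (lam (RtoC p0))) (Re (lam (RtoC p0)) - Re (lam s))) as H6.
  replace (Re (lam (zt t)) - Re (lam (RtoC pt)) + (Re (lam (RtoC pt)) - Re (lam s))) with (Re (lam (zt t)) - Re (lam s)) in H5 by ring.
  replace (Re (lam (RtoC pt)) - Re (lam (RtoC p0)) + (Re (lam (RtoC p0)) - Re (lam s))) with (Re (lam (RtoC pt)) - Re (lam s)) in H6 by ring.
  rewrite Rabs_minus_sym in H2. lra.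
Qed.

Lemma ell_sq t : 0 <= t <= bb -> ell t ^ 2 <= 441 / 400 * t.
Proof.
  intros Ht. pose proof (ell_lin t Ht) as L1. pose proof (ell_sqrt t Ht) as L2.
  pose proof (sqrt_pos t) as S0. pose proof (sqrt_sqrt t ltac:(lra)) as S1.
  rewrite <- (pow2_abs (ell t)). pose proof (Rabs_pos (ell t)).
  destruct (Rle_dec (80 * K * d1) (sqrt t)).
  - assert (Rabs (ell t) <= 21/20 * sqrt t) by lra. nra.
  - assert (K * t <= 1 / 20 * sqrt t).
    { replace (K * t) with (K * sqrt t * sqrt t) by (rewrite Rmult_assoc, S1; ring).
      assert (K * sqrt t <= K * (80 * K * d1)) by (apply Rmult_le_compat_l; lra).
      assert (K * (80 * K * d1) <= 1/20) by nra. nra. }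
    nra.
Qed.

Lemma ell_deriv t : 0 <= t <= bb -> derivable_pt_lim ell t (- Re (dlam (zt t))).
Proof.
  intros Ht. unfold ell.
  replace (- Re (dlam (zt t))) with (Re (Cmul (dlam (zt t)) (-1, 0)) - 0)
    by (unfold Cmul, Re, Im; simpl; ring).
  apply dl_minus; [|apply dl_const].
  assert (E : forall u, zt u = Cadd s (Cmul (RtoC u) (-1, 0))).
  { intros u. rewrite zt_parts. unfold Cadd, Cmul, RtoC, Re, Im; simpl. f_equal; ring. }
  replace (fun u => Re (lam (zt u))) with (fun u => Re (lam (Cadd s (Cmul (RtoC u) (-1, 0)))))
    by (apply functional_extensionality; intros; rewrite E; auto).
  apply cd_line. rewrite <- E. apply Hl, HU. apply box_E. apply box_zt; auto.
Qed.

Variable eps : R.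
Hypothesis heps : 0 < eps <= 1.
Definition kap (w : Cpx) : Cpx := (Re w, Rmax (Im w) (eps / 2)).
Definition Qf (w : Cpx) : Cpx := Cdiv (RtoC (-2)) (kap w).
Definition Dd (t : R) : Cpx := dlam (zt (cl bb t)).

Lemma Qf_parts w : eps / 2 <= Im w ->
  Re (Qf w) = -2 * Re w / (Re w ^ 2 + Im w ^ 2) /\ Im (Qf w) = 2 * Im w / (Re w ^ 2 + Im w ^ 2).
Proof.
  intros H. assert (0 < Re w ^ 2 + Im w ^ 2) by nra.
  unfold Qf, kap, Cdiv, Cmul, Cinv, RtoC. unfold Re, Im in *. simpl. rewrite Rmax_left by lra.
  split; field; lra.
Qed.

Variable f : R -> Cpx.
Hypothesis Hf0 : f 0 = (0, eps).
Hypothesis Hfc : forall t, ccont f t.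
Hypothesis Hfd : forall u, 0 <= u <= bb -> has_deriv_within f 0 bb u (Cadd (Qf (f u)) (Dd u)).

Lemma bb_pos : 0 < bb.
Proof. unfold bb. lra. Qed.
Lemma bb_le : bb <= T + 1.
Proof. unfold bb. lra. Qed.

Lemma deriv_xy t : 0 < t < bb -> eps / 2 <= Im (f t) ->
  derivable_pt_lim (fun u => Re (f u)) t (-2 * Re (f t) / (Re (f t) ^ 2 + Im (f t) ^ 2) + Re (dlam (zt t))) /\
  derivable_pt_lim (fun u => Im (f u)) t (2 * Im (f t) / (Re (f t) ^ 2 + Im (f t) ^ 2) + Im (dlam (zt t))).
Proof.
  intros Ht Hy. destruct (comp_of_hdw f 0 bb t _ Ht (Hfd t ltac:(lra))) as [H1 H2].
  destruct (Qf_parts (f t) Hy) as [E1 E2].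
  unfold Dd in *. rewrite (cl_id bb) in H1, H2 by lra.
  unfold Cadd at 1 in H1. unfold Cadd at 1 in H2. unfold Re at 1 in H1. unfold Im at 1 in H2. simpl in H1, H2.
  rewrite <- E1, <- E2. split; auto.
Qed.

Definition good t := 0 < Im (f t) /\ 2 * t + eps ^ 2 / 4 <= Im (f t) ^ 2.
Lemma good_ge t : 0 <= t -> good t -> eps / 2 <= Im (f t).
Proof. intros H0 [H1 H2]. destruct (Rle_dec (eps/2) (Im (f t))); auto. nra. Qed.

Lemma y_cont t : continuity_pt (fun u => Im (f u)) t.
Proof. apply ccont_Im. apply Hfc. Qed.
Lemma x_cont t : continuity_pt (fun u => Re (f u)) t.
Proof. apply ccont_Re. apply Hfc. Qed.

Lemma beta_small : 2 * (2 * T + 5) * (2 * K * d1) <= 1 / 10.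
Proof. replace (2 * (2 * T + 5) * (2 * K * d1)) with (40 * K * (2 * T + 5) * d1 / 10) by field. lra. Qed.

Lemma ybound m : 0 <= m <= bb -> (forall t, 0 < t < m -> good t) ->
  Im (f m) <= eps + 2 * sqrt 2 * sqrt m + 2 * K * d1 * m.
Proof.
  intros Hm Hg.
  assert (S2 : 0 < sqrt 2) by (apply sqrt_lt_R0; lra).
  assert (S22 : sqrt 2 * sqrt 2 = 2) by (apply sqrt_sqrt; lra).
  assert (Mo := mono_le (fun t => Im (f t) - 2 * sqrt 2 * sqrt t - 2 * K * d1 * t)
     (fun t => (2 * Im (f t) / (Re (f t) ^ 2 + Im (f t) ^ 2) + Im (dlam (zt t))) - 2 * sqrt 2 * / (2 * sqrt t) - 2 * K * d1) 0 m ltac:(lra)).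
  cut (Im (f m) - 2 * sqrt 2 * sqrt m - 2 * K * d1 * m <= Im (f 0) - 2 * sqrt 2 * sqrt 0 - 2 * K * d1 * 0).
  { rewrite Hf0, sqrt_0. unfold Im at 2. simpl. lra. }
  apply Mo.
  - intros t Ht. apply dl_minus. apply dl_minus. apply (deriv_xy t ltac:(lra) (good_ge t ltac:(lra) (Hg t Ht))).
    apply dl_scal. apply derivable_pt_lim_sqrt. lra. apply dl_lin.
  - intros t Ht. destruct (Hg t Ht) as [Y1 Y2].
    pose proof (B_bound t ltac:(lra)) as HB. apply Rabs_le_between in HB.
    set (x := Re (f t)) in *. set (y := Im (f t)) in *.
    assert (St : 0 < sqrt t) by (apply sqrt_lt_R0; lra).
    assert (Stt : sqrt t * sqrt t = t) by (apply sqrt_sqrt; lra).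
    assert (Hq : sqrt 2 * sqrt t <= y).
    { apply Rsqr_incr_0_var. unfold Rsqr. replace (sqrt 2 * sqrt t * (sqrt 2 * sqrt t)) with ((sqrt 2 * sqrt 2) * (sqrt t * sqrt t)) by ring.
      rewrite S22, Stt. nra. lra. }
    assert (A1 : 2 * y / (x ^ 2 + y ^ 2) <= 2 / y).
    { apply Rmult_le_reg_r with (y * (x ^ 2 + y ^ 2)). nra.
      unfold Rdiv. field_simplify; try lra. nra. nra. }
    assert (A2 : 2 / y <= 2 * sqrt 2 * / (2 * sqrt t)).
    { replace (2 * sqrt 2 * / (2 * sqrt t)) with ((sqrt 2 * sqrt 2) / (sqrt 2 * sqrt t)) by (field; lra).
      rewrite S22. apply Rmult_le_compat_l. lra. apply Rinv_le_contravar. nra. auto. }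
    lra.
  - intros t Ht. apply continuity_pt_minus. apply continuity_pt_minus. apply y_cont.
    apply continuity_pt_scal. apply continuity_pt_sqrt. lra.
    eapply cont_of_deriv. apply dl_lin.
Qed.

Lemma ybound' m : 0 <= m <= bb -> (forall t, 0 < t < m -> good t) -> Im (f m) <= 2 * T + 5.
Proof.
  intros Hm Hg. pose proof (ybound m Hm Hg).
  assert (S22 : sqrt 2 * sqrt 2 = 2) by (apply sqrt_sqrt; lra).
  assert (Smm : sqrt m * sqrt m = m) by (apply sqrt_sqrt; lra).
  assert (2 * sqrt 2 * sqrt m <= 2 + m).
  { pose proof (pow2_ge_0 (sqrt 2 - sqrt m)). replace ((sqrt 2 - sqrt m) ^ 2) with (sqrt 2 * sqrt 2 + sqrt m * sqrt m - 2 * sqrt 2 * sqrt m) in H0 by ring. lra. }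
  assert (2 * K * d1 <= 1).
  { assert (2 * K * d1 * (20 * (2 * T + 5)) <= 1) by (replace (2 * K * d1 * (20 * (2 * T + 5))) with (40 * K * (2 * T + 5) * d1) by ring; lra).
    assert (0 <= 2 * K * d1) by nra. nra. }
  assert (2 * K * d1 * m <= m) by nra. pose proof bb_le. lra.
Qed.

Lemma core m : 0 <= m <= bb -> (forall t, 0 <= t < m -> good t) ->
  0 < Im (f m) /\ eps ^ 2 + 12 / 5 * m <= Im (f m) ^ 2.
Proof.
  intros Hm Hg.
  assert (Hpos : 0 < Im (f m)).
  { destruct (Req_dec m 0) as [->|Hm0]. rewrite Hf0. unfold Im. simpl. lra.
    destruct (cont_pt_elim _ _ (y_cont m) (eps / 4) ltac:(lra)) as [d [Hd Hd']].
    set (tau := m - Rmin (d / 2) (m / 2)).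
    assert (Ht1 : 0 <= tau < m). { unfold tau. pose proof (Rmin_r (d/2) (m/2)). assert (0 < Rmin (d/2) (m/2)) by (apply Rmin_pos; lra). lra. }
    assert (Ht2 : Rabs (tau - m) < d). { unfold tau. pose proof (Rmin_l (d/2) (m/2)). assert (0 < Rmin (d/2) (m/2)) by (apply Rmin_pos; lra).
      rewrite Rabs_left; lra. }
    specialize (Hd' tau Ht2). pose proof (good_ge tau ltac:(lra) (Hg tau Ht1)). apply Rabs_lt_between in Hd'. lra. }
  split; auto.
  assert (Hell0 : ell 0 = 0).
  { unfold ell. replace (zt 0) with s. ring. rewrite zt_parts. destruct s. unfold Re, Im. simpl. f_equal. ring. }
  assert (Mo := mono_ge (fun t => Im (f t) * Im (f t) - (Re (f t) + ell t) * (Re (f t) + ell t) - 12 / 5 * t)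
     (fun t => ((2 * Im (f t) / (Re (f t) ^ 2 + Im (f t) ^ 2) + Im (dlam (zt t))) * Im (f t) + Im (f t) * (2 * Im (f t) / (Re (f t) ^ 2 + Im (f t) ^ 2) + Im (dlam (zt t))))
        - (((-2 * Re (f t) / (Re (f t) ^ 2 + Im (f t) ^ 2) + Re (dlam (zt t))) + - Re (dlam (zt t))) * (Re (f t) + ell t)
           + (Re (f t) + ell t) * ((-2 * Re (f t) / (Re (f t) ^ 2 + Im (f t) ^ 2) + Re (dlam (zt t))) + - Re (dlam (zt t))))
        - 12 / 5) 0 m ltac:(lra)).
  cut (Im (f 0) * Im (f 0) - (Re (f 0) + ell 0) * (Re (f 0) + ell 0) - 12 / 5 * 0 <=
       Im (f m) * Im (f m) - (Re (f m) + ell m) * (Re (f m) + ell m) - 12 / 5 * m).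
  { rewrite Hf0, Hell0. unfold Re at 1 2, Im at 1 2. simpl. intros Hc. pose proof (Rle_0_sqr (Re (f m) + ell m)). unfold Rsqr in *. nra. }
  apply Mo.
  - intros t Ht. destruct (deriv_xy t ltac:(lra) (good_ge t ltac:(lra) (Hg t ltac:(lra)))) as [Dx Dy].
    apply dl_minus. apply dl_minus. apply dl_mult; auto.
    apply (dl_mult (fun y => Re (f y) + ell y) (fun y => Re (f y) + ell y)); apply (dl_plus (fun y => Re (f y)) ell); first [exact Dx | apply ell_deriv; lra].
    apply (dl_lin (12 / 5)).
  - intros t Ht. destruct (Hg t ltac:(lra)) as [Y1 Y2].
    pose proof (B_bound t ltac:(lra)) as HB. apply Rabs_le_between in HB.
    pose proof (ybound' t ltac:(lra) (fun u Hu => Hg u ltac:(lra))) as HY.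
    pose proof (ell_sq t ltac:(lra)) as HL.
    pose proof beta_small as Hbs.
    set (x := Re (f t)) in *. set (y := Im (f t)) in *. set (B := Im (dlam (zt t))) in *. set (l := ell t) in *.
    set (r2 := x ^ 2 + y ^ 2).
    assert (Hr2 : 0 < r2) by (unfold r2; nra).
    assert (E : (2 * y / r2 + B) * y + y * (2 * y / r2 + B) -
      ((-2 * x / r2 + Re (dlam (zt t)) + - Re (dlam (zt t))) * (x + l) +
       (x + l) * (-2 * x / r2 + Re (dlam (zt t)) + - Re (dlam (zt t)))) - 12 / 5
      = 4 + 4 * l * x / r2 + 2 * y * B - 12 / 5).
    { unfold r2. field. fold r2. lra. }
    rewrite E.
    assert (L2 : 2 * Rabs l <= 3 / 2 * y).
    { pose proof (Rabs_pos l). assert (Rabs l ^ 2 = l ^ 2) by apply pow2_abs.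
      destruct (Rle_dec (2 * Rabs l) (3/2*y)) as [|Hn]; auto. exfalso.
      assert (4 * Rabs l ^ 2 > 9/4 * y ^ 2) by nra. nra. }
    assert (L3 : - (3 / 2) * r2 <= 4 * l * x).
    { assert (Q1 : 4 * Rabs l * Rabs x <= 3 * y * Rabs x).
      { pose proof (Rabs_pos x). nra. }
      assert (Q2 : 3 * y * Rabs x <= 3 / 2 * r2).
      { unfold r2. rewrite <- (pow2_abs x). pose proof (pow2_ge_0 (Rabs x - y)). nra. }
      assert (Q3 : Rabs (4 * l * x) = 4 * Rabs l * Rabs x).
      { rewrite !Rabs_mult. rewrite (Rabs_right 4) by lra. ring. }
      pose proof (Rabs_le_between' (4 * l * x) 0 (3/2 * r2)). 
      assert (Rabs (4 * l * x) <= 3/2 * r2) by lra. apply Rabs_le_between in H0. lra. }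
    assert (L4 : - (3 / 2) <= 4 * l * x / r2).
    { apply Rmult_le_reg_r with r2; auto. unfold Rdiv. rewrite Rmult_assoc, Rinv_l by lra. lra. }
    assert (L5 : - (1 / 10) <= 2 * y * B).
    { assert (Rabs (2 * y * B) <= 2 * (2 * T + 5) * (2 * K * d1)).
      { rewrite !Rabs_mult. rewrite (Rabs_right 2) by lra. rewrite (Rabs_right y) by lra.
        apply Rmult_le_compat. nra. apply Rabs_pos. nra. apply Rabs_le. lra. }
      apply Rabs_le_between in H. lra. }
    lra.
  - intros t Ht. apply continuity_pt_minus. apply continuity_pt_minus.
    apply continuity_pt_mult; apply y_cont.
    apply continuity_pt_mult; apply continuity_pt_plus; try apply x_cont; eapply cont_of_deriv; apply ell_deriv; lra.
    eapply cont_of_deriv. apply dl_lin.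
Qed.

Lemma all_good : forall u, 0 <= u <= bb -> good u.
Proof.
  set (E0 := fun x => 0 <= x <= bb /\ forall t, 0 <= t <= x -> good t).
  assert (Hb : bound E0). { exists bb. intros x [Hx _]. lra. }
  assert (E00 : E0 0).
  { split. pose proof bb_pos. lra. intros t Ht. replace t with 0 by lra.
    unfold good. rewrite Hf0. unfold Im. simpl. nra. }
  assert (Hne : exists x, E0 x) by (exists 0; exact E00).
  destruct (completeness E0 Hb Hne) as [m [Hub Hlub]].
  assert (Hm0 : 0 <= m) by (apply Hub; exact E00).
  assert (Hmb : m <= bb) by (apply Hlub; intros x [Hx _]; lra).
  assert (G1 : forall t, 0 <= t < m -> good t).
  { intros t Ht. destruct (Rle_dec m t) as [|Hn]; [lra|].
    assert (~ is_upper_bound E0 t) as Hnu. { intros Hu. apply Hlub in Hu. lra. }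
    unfold is_upper_bound in Hnu. apply Classical_Pred_Type.not_all_ex_not in Hnu. destruct Hnu as [x Hx].
    apply Classical_Prop.imply_to_and in Hx. destruct Hx as [[Hx1 Hx2] Hx3]. apply Hx2. lra. }
  destruct (core m ltac:(lra) G1) as [C1 C2].
  assert (Hmeq : m = bb).
  { destruct (Req_dec m bb); auto. exfalso.
    assert (Cg : continuity_pt (fun t => Im (f t) * Im (f t) - 2 * t) m).
    { apply continuity_pt_minus. apply continuity_pt_mult; apply y_cont. eapply cont_of_deriv. apply dl_lin. }
    destruct (cont_pt_elim _ _ Cg (eps ^ 2 / 2) ltac:(nra)) as [d [Hd Hd']].
    destruct (cont_pt_elim _ _ (y_cont m) (Im (f m) / 2) ltac:(lra)) as [d' [Hd2 Hd2']].
    set (x := Rmin (m + Rmin d d' / 2) bb).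
    assert (0 < Rmin d d') by (apply Rmin_pos; lra). pose proof (Rmin_l d d'). pose proof (Rmin_r d d').
    assert (Hx : m < x). { unfold x. apply Rmin_glb_lt; lra. }
    assert (Hx2 : x <= m + Rmin d d' / 2) by apply Rmin_l.
    assert (Ex : E0 x).
    { split. split. lra. apply Rmin_r. intros t Ht. destruct (Rle_dec m t) as [Hmt|Hmt].
      - assert (Q4 : Rabs (t - m) < d) by (rewrite Rabs_right; lra). assert (Q5 : Rabs (t - m) < d') by (rewrite Rabs_right; lra).
        specialize (Hd' t Q4). specialize (Hd2' t Q5). apply Rabs_lt_between in Hd'. apply Rabs_lt_between in Hd2'.
        split. lra. nra.
      - apply G1. lra. }
    apply Hub in Ex. lra. }
  intros u Hu. destruct (Rle_dec bb u). replace u with m by lra. split; auto. nra.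
  apply G1. lra.
Qed.
End Ctx.

Lemma dl_local (F G : R -> R) x l : derivable_pt_lim F x l ->
  (exists r, 0 < r /\ forall y, Rabs (y - x) < r -> G y = F y) -> derivable_pt_lim G x l.
Proof.
  intros H [r [Hr Hr']] eps He. destruct (H eps He) as [d Hd].
  assert (Hm : 0 < Rmin d r) by (apply Rmin_pos; [apply cond_pos|lra]).
  exists (mkposreal _ Hm). intros h Hh0 Hh. simpl in Hh.
  rewrite (Hr' (x + h)), (Hr' x).
  apply Hd; auto. eapply Rlt_le_trans; [exact Hh| apply Rmin_l].
  unfold Rminus. rewrite Rplus_opp_r, Rabs_R0. lra.
  replace (x + h - x) with h by ring. eapply Rlt_le_trans; [exact Hh| apply Rmin_r].
Qed.

Lemma hdw_wcont (f : R -> Cpx) a b u v : has_deriv_within f a b u v ->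
  forall e, 0 < e -> exists r, 0 < r /\ forall t, a <= t <= b -> Rabs (t - u) < r -> Cmod (Csub (f t) (f u)) < e.
Proof.
  intros H e He. destruct (H 1 ltac:(lra)) as [r [Hr Hr']].
  pose proof (Cmod_ge0 v).
  exists (Rmin r (e / (Cmod v + 1))). split. apply Rmin_pos; auto. apply Rdiv_lt_0_compat; lra.
  intros t Ht Htu. specialize (Hr' (t - u)). replace (u + (t - u)) with t in Hr' by ring.
  specialize (Hr' Ht (Rlt_le_trans _ _ _ Htu (Rmin_l _ _))).
  assert (Hq : Rabs (t - u) < e / (Cmod v + 1)) by (eapply Rlt_le_trans; [exact Htu|apply Rmin_r]).
  assert (T1 : Cmod (Csub (f t) (f u)) <= Cmod (Csub (Csub (f t) (f u)) (Cmul (RtoC (t - u)) v)) + Cmod (Cmul (RtoC (t - u)) v)).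
  { eapply Rle_trans; [|apply Cmod_tri]. right. f_equal. rewrite !Csub_parts. unfold Cadd, Re, Im. simpl. f_equal; ring. }
  rewrite Cmod_mul, Cmod_RtoC in T1.
  assert (Rabs (t - u) * (Cmod v + 1) < e).
  { apply (Rmult_lt_compat_r (Cmod v + 1)) in Hq; [|lra]. unfold Rdiv in Hq. rewrite Rmult_assoc, Rinv_l in Hq; lra. }
  pose proof (Rabs_pos (t - u)). nra.
Qed.

Section Uniq.
Variables (b eps : R) (D : R -> Cpx) (f g : R -> Cpx).
Hypothesis hb : 0 < b.
Hypothesis heps : 0 < eps.
Hypothesis Hfg0 : g 0 = f 0.
Hypothesis Hf : forall u, 0 <= u <= b -> has_deriv_within f 0 b u (Cadd (Cdiv (RtoC (-2)) (f u)) (D u)).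
Hypothesis Hg : forall u, 0 <= u <= b -> has_deriv_within g 0 b u (Cadd (Cdiv (RtoC (-2)) (g u)) (D u)).
Hypothesis Hfy : forall u, 0 <= u <= b -> eps / 2 <= Im (f u).

Definition ext (h : R -> Cpx) t := h (cl b t).

Lemma ext_cont h : (forall u, 0 <= u <= b -> forall e, 0 < e -> exists r, 0 < r /\
     forall t, 0 <= t <= b -> Rabs (t - u) < r -> Cmod (Csub (h t) (h u)) < e) ->
  forall t, ccont (ext h) t.
Proof.
  intros H t e He. pose proof (cl_range b hb t) as Hc. destruct (H (cl b t) Hc e He) as [r [Hr Hr']].
  exists r. split; auto. intros t' Ht'. unfold ext. apply Hr'. apply cl_range; auto.
  eapply Rle_lt_trans. apply cl_lip. all: auto.
Qed.

Lemma ext_eq h t : 0 <= t <= b -> ext h t = h t.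
Proof. intros. unfold ext. rewrite cl_id; auto. Qed.


Lemma ext_local (h : R -> Cpx) (F : Cpx -> R) t l : 0 < t < b ->
  derivable_pt_lim (fun u => F (h u)) t l -> derivable_pt_lim (fun u => F (ext h u)) t l.
Proof.
  intros Ht H. apply (dl_local _ _ _ _ H). exists (Rmin t (b - t)). split. apply Rmin_pos; lra.
  intros y Hy. pose proof (Rmin_l t (b - t)). pose proof (Rmin_r t (b - t)).
  rewrite ext_eq; auto. apply Rabs_lt_between in Hy. lra.
Qed.

Lemma fcont : forall t, ccont (ext f) t.
Proof. apply ext_cont. intros u Hu. apply (hdw_wcont f 0 b u _ (Hf u Hu)). Qed.
Lemma gcont : forall t, ccont (ext g) t.
Proof. apply ext_cont. intros u Hu. apply (hdw_wcont g 0 b u _ (Hg u Hu)). Qed.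

Definition CC := 32 / eps ^ 2.

Lemma cdiv_parts z : Re (Cdiv (RtoC (-2)) z) = -2 * Re z / (Re z ^ 2 + Im z ^ 2) /\
                     Im (Cdiv (RtoC (-2)) z) = 2 * Im z / (Re z ^ 2 + Im z ^ 2).
Proof. unfold Cdiv, Cmul, Cinv, RtoC, Re, Im. simpl. split; unfold Rdiv; ring. Qed.

Definition dif1 t := Re (ext g t) - Re (ext f t).
Definition dif2 t := Im (ext g t) - Im (ext f t).
Definition ddif1 t := Re (Cadd (Cdiv (RtoC (-2)) (g t)) (D t)) - Re (Cadd (Cdiv (RtoC (-2)) (f t)) (D t)).
Definition ddif2 t := Im (Cadd (Cdiv (RtoC (-2)) (g t)) (D t)) - Im (Cadd (Cdiv (RtoC (-2)) (f t)) (D t)).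
Definition hh t := (dif1 t * dif1 t + dif2 t * dif2 t) * exp (- CC * t).
Definition dhh t := ((ddif1 t * dif1 t + dif1 t * ddif1 t) + (ddif2 t * dif2 t + dif2 t * ddif2 t)) * exp (- CC * t)
   + (dif1 t * dif1 t + dif2 t * dif2 t) * (exp (- CC * t) * - CC).

Lemma key_ineq (g1 g2 f1 f2 : R) : eps ^ 2 / 16 <= g1 ^ 2 + g2 ^ 2 -> eps ^ 2 / 4 <= f1 ^ 2 + f2 ^ 2 ->
  2 * ((g1 - f1) * ((-2 * g1 / (g1 ^ 2 + g2 ^ 2)) - (-2 * f1 / (f1 ^ 2 + f2 ^ 2)))
     + (g2 - f2) * ((2 * g2 / (g1 ^ 2 + g2 ^ 2)) - (2 * f2 / (f1 ^ 2 + f2 ^ 2))))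
  <= CC * ((g1 - f1) ^ 2 + (g2 - f2) ^ 2).
Proof.
  intros HG HF. set (G := g1 ^ 2 + g2 ^ 2) in *. set (F := f1 ^ 2 + f2 ^ 2) in *.
  assert (Ge : 0 < eps ^ 2) by nra.
  set (e1 := (-2 * g1 / G) - (-2 * f1 / F)). set (e2 := (2 * g2 / G) - (2 * f2 / F)).
  set (d1 := g1 - f1). set (d2 := g2 - f2).
  assert (Id : e1 ^ 2 + e2 ^ 2 = 4 * (d1 ^ 2 + d2 ^ 2) / (F * G)).
  { unfold e1, e2, d1, d2, F, G. field. split; unfold F, G in *; nra. }
  assert (FG : eps ^ 2 * eps ^ 2 / 64 <= F * G) by nra.
  assert (Bd : e1 ^ 2 + e2 ^ 2 <= 256 / (eps ^ 2 * eps ^ 2) * (d1 ^ 2 + d2 ^ 2)).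
  { rewrite Id. assert (S0 : 0 <= d1 ^ 2 + d2 ^ 2) by nra.
    unfold Rdiv. apply Rle_trans with (4 * (d1 ^ 2 + d2 ^ 2) * / (eps ^ 2 * eps ^ 2 / 64)).
    - apply Rmult_le_compat_l. lra. apply Rinv_le_contravar. nra. exact FG.
    - right. field. lra. }
  set (lam := 16 / eps ^ 2).
  assert (Hl : 0 < lam) by (unfold lam; apply Rdiv_lt_0_compat; lra).
  assert (Hsq : 0 <= (lam * d1 - e1) ^ 2 + (lam * d2 - e2) ^ 2) by (apply Rplus_le_le_0_compat; apply pow2_ge_0).
  assert (E2 : (lam * d1 - e1) ^ 2 + (lam * d2 - e2) ^ 2 = lam * lam * (d1 ^ 2 + d2 ^ 2) + (e1 ^ 2 + e2 ^ 2) - 2 * lam * (d1 * e1 + d2 * e2)) by ring.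
  assert (E3 : lam * lam = 256 / (eps ^ 2 * eps ^ 2)) by (unfold lam; field; lra).
  assert (E4 : CC = 2 * lam) by (unfold CC, lam; field; lra).
  rewrite <- E3 in Bd.
  assert (H7 : lam * (2 * (d1 * e1 + d2 * e2)) <= lam * (2 * lam * (d1 ^ 2 + d2 ^ 2))) by lra.
  apply Rmult_le_reg_l in H7; auto.
  rewrite E4. fold e1 e2 d1 d2. lra.
Qed.

Lemma gron m m' : 0 <= m < m' -> m' <= b -> g m = f m ->
  (forall t, m <= t <= m' -> eps / 4 <= Cmod (g t)) ->
  forall t, m <= t <= m' -> g t = f t.
Proof.
  intros Hm Hm' Heq Hgl.
  assert (Hh : forall t, m <= t <= m' -> hh t <= hh m).
  { intros t Ht. destruct (Req_dec t m) as [->|Htm]; [lra|].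
    apply (mono_le hh dhh m t); try lra.
    - intros x Hx. assert (Hx' : 0 < x < b) by lra.
      destruct (comp_of_hdw f 0 b x _ Hx' (Hf x ltac:(lra))) as [F1 F2].
      destruct (comp_of_hdw g 0 b x _ Hx' (Hg x ltac:(lra))) as [G1 G2].
      apply (ext_local f Re x _ Hx') in F1. apply (ext_local f Im x _ Hx') in F2.
      apply (ext_local g Re x _ Hx') in G1. apply (ext_local g Im x _ Hx') in G2.
      unfold hh, dhh. apply (dl_mult (fun t => dif1 t * dif1 t + dif2 t * dif2 t) (fun t => exp (- CC * t))).
      + apply (dl_plus (fun t => dif1 t * dif1 t) (fun t => dif2 t * dif2 t)); apply dl_mult; unfold dif1, dif2, ddif1, ddif2; apply dl_minus; auto.
      + apply (dl_exp_lin (- CC)).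
    - intros x Hx. unfold dhh, dif1, dif2, ddif1, ddif2. rewrite !ext_eq by lra.
      destruct (cdiv_parts (g x)) as [Cg1 Cg2]. destruct (cdiv_parts (f x)) as [Cf1 Cf2].
      assert (R1 : forall z w : Cpx, Re (Cadd z w) = Re z + Re w) by reflexivity.
      assert (R2 : forall z w : Cpx, Im (Cadd z w) = Im z + Im w) by reflexivity.
      rewrite !R1, !R2, Cg1, Cg2, Cf1, Cf2.
      pose proof (Hgl x ltac:(lra)) as Hg'. pose proof (Hfy x ltac:(lra)) as Hf'.
      assert (HG : eps ^ 2 / 16 <= Re (g x) ^ 2 + Im (g x) ^ 2).
      { rewrite <- Cmod_sq. nra. }
      assert (HF : eps ^ 2 / 4 <= Re (f x) ^ 2 + Im (f x) ^ 2) by nra.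
      pose proof (key_ineq _ _ _ _ HG HF) as K1. pose proof (exp_pos (- CC * x)).
      set (E := exp (- CC * x)) in *.
      set (P := 2 * ((Re (g x) - Re (f x)) * ((-2 * Re (g x) / (Re (g x) ^ 2 + Im (g x) ^ 2)) - (-2 * Re (f x) / (Re (f x) ^ 2 + Im (f x) ^ 2)))
         + (Im (g x) - Im (f x)) * ((2 * Im (g x) / (Re (g x) ^ 2 + Im (g x) ^ 2)) - (2 * Im (f x) / (Re (f x) ^ 2 + Im (f x) ^ 2))))) in *.
      assert (EqP : (-2 * Re (g x) / (Re (g x) ^ 2 + Im (g x) ^ 2) + Re (D x) - (-2 * Re (f x) / (Re (f x) ^ 2 + Im (f x) ^ 2) + Re (D x))) *
         (Re (g x) - Re (f x)) + (Re (g x) - Re (f x)) * (-2 * Re (g x) / (Re (g x) ^ 2 + Im (g x) ^ 2) + Re (D x) -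
          (-2 * Re (f x) / (Re (f x) ^ 2 + Im (f x) ^ 2) + Re (D x))) +
         ((2 * Im (g x) / (Re (g x) ^ 2 + Im (g x) ^ 2) + Im (D x) - (2 * Im (f x) / (Re (f x) ^ 2 + Im (f x) ^ 2) + Im (D x))) *
         (Im (g x) - Im (f x)) + (Im (g x) - Im (f x)) * (2 * Im (g x) / (Re (g x) ^ 2 + Im (g x) ^ 2) + Im (D x) -
          (2 * Im (f x) / (Re (f x) ^ 2 + Im (f x) ^ 2) + Im (D x)))) = P) by (unfold P; ring).
      rewrite EqP.
      replace ((Re (g x) - Re (f x)) * (Re (g x) - Re (f x)) + (Im (g x) - Im (f x)) * (Im (g x) - Im (f x)))
        with ((Re (g x) - Re (f x)) ^ 2 + (Im (g x) - Im (f x)) ^ 2) by ring.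
      nra.
    - intros x Hx. unfold hh, dif1, dif2. apply continuity_pt_mult. apply continuity_pt_plus; apply continuity_pt_mult;
      apply continuity_pt_minus; first [apply ccont_Re | apply ccont_Im]; first [apply gcont | apply fcont].
      eapply cont_of_deriv. apply dl_exp_lin. }
  intros t Ht. specialize (Hh t Ht). unfold hh, dif1, dif2 in Hh. rewrite !ext_eq in Hh by lra.
  rewrite Heq in Hh. replace ((Re (f m) - Re (f m)) * (Re (f m) - Re (f m)) + (Im (f m) - Im (f m)) * (Im (f m) - Im (f m))) with 0 in Hh by ring.
  rewrite Rmult_0_l in Hh. pose proof (exp_pos (- CC * t)).
  assert (Hz : (Re (g t) - Re (f t)) * (Re (g t) - Re (f t)) + (Im (g t) - Im (f t)) * (Im (g t) - Im (f t)) = 0).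
  { apply Rle_antisym. apply (Rmult_le_reg_r (exp (- CC * t))); auto. rewrite Rmult_0_l. lra. apply Rplus_le_le_0_compat; apply Rle_0_sqr. }
  revert Hz. generalize (g t) (f t). intros [p q] [p' q'] Hz. unfold Re, Im in Hz. simpl in Hz. destruct (Rplus_sqr_eq_0 _ _ Hz). f_equal; lra.
Qed.

Lemma Cmod_sub_sym z w : Cmod (Csub z w) = Cmod (Csub w z).
Proof. rewrite !Csub_parts. unfold Cmod, Re, Im. simpl. f_equal. ring. Qed.

Lemma Cmod_rev z w : Cmod z - Cmod (Csub z w) <= Cmod w.
Proof.
  assert (Cmod z <= Cmod w + Cmod (Csub z w)).
  { eapply Rle_trans; [|apply Cmod_tri]. right. f_equal. rewrite Csub_parts. unfold Cadd, Re, Im. destruct z; simpl; f_equal; ring. }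
  lra.
Qed.

Lemma eq_of_Cmod0 z w : Cmod (Csub z w) = 0 -> z = w.
Proof.
  intros H. apply Cmod_eq0 in H. rewrite Csub_parts in H. unfold RtoC in H. injection H. intros.
  destruct z, w. unfold Re, Im in *. simpl in *. f_equal; lra.
Qed.

Theorem uniq : forall u, 0 <= u <= b -> g u = f u.
Proof.
  set (E0 := fun x => 0 <= x <= b /\ forall t, 0 <= t <= x -> g t = f t).
  assert (E00 : E0 0). { split. lra. intros t Ht. replace t with 0 by lra. auto. }
  assert (Hb : bound E0). { exists b. intros x [Hx _]. lra. }
  destruct (completeness E0 Hb (ex_intro _ 0 E00)) as [m [Hub Hlub]].
  assert (Hm0 : 0 <= m) by (apply Hub; exact E00).
  assert (Hmb : m <= b) by (apply Hlub; intros x [Hx _]; lra).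
  assert (G1 : forall t, 0 <= t < m -> g t = f t).
  { intros t Ht. destruct (Rle_dec m t) as [|Hn]; [lra|].
    assert (~ is_upper_bound E0 t) as Hnu. { intros Hu. apply Hlub in Hu. lra. }
    unfold is_upper_bound in Hnu. apply Classical_Pred_Type.not_all_ex_not in Hnu. destruct Hnu as [x Hx].
    apply Classical_Prop.imply_to_and in Hx. destruct Hx as [[Hx1 Hx2] Hx3]. apply Hx2. lra. }
  assert (Gm : g m = f m).
  { destruct (Req_dec m 0) as [->|Hm]; auto.
    apply eq_of_Cmod0. destruct (Req_dec (Cmod (Csub (g m) (f m))) 0) as [|Hne]; auto. exfalso.
    pose proof (Cmod_ge0 (Csub (g m) (f m))) as Hc0.
    set (e := Cmod (Csub (g m) (f m))) in *.
    destruct (hdw_wcont g 0 b m _ (Hg m ltac:(lra)) (e/2) ltac:(lra)) as [r1 [Hr1 Hr1']].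
    destruct (hdw_wcont f 0 b m _ (Hf m ltac:(lra)) (e/2) ltac:(lra)) as [r2 [Hr2 Hr2']].
    set (tau := m - Rmin (Rmin r1 r2 / 2) (m / 2)).
    assert (0 < Rmin r1 r2) by (apply Rmin_pos; lra). pose proof (Rmin_l r1 r2). pose proof (Rmin_r r1 r2).
    assert (0 < Rmin (Rmin r1 r2 / 2) (m / 2)) by (apply Rmin_pos; lra).
    pose proof (Rmin_l (Rmin r1 r2 / 2) (m / 2)). pose proof (Rmin_r (Rmin r1 r2 / 2) (m / 2)).
    assert (Ht1 : 0 <= tau < m) by (unfold tau; lra).
    assert (Ht2 : Rabs (tau - m) < r1) by (unfold tau; rewrite Rabs_left; lra).
    assert (Ht3 : Rabs (tau - m) < r2) by (unfold tau; rewrite Rabs_left; lra).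
    specialize (Hr1' tau ltac:(lra) Ht2). specialize (Hr2' tau ltac:(lra) Ht3).
    rewrite (G1 tau Ht1) in Hr1'.
    pose proof (Csub_tri (g m) (f tau) (f m)). rewrite Cmod_sub_sym in Hr1'. fold e in H5. lra. }
  assert (Hmeq : m = b).
  { destruct (Req_dec m b); auto. exfalso.
    destruct (hdw_wcont g 0 b m _ (Hg m ltac:(lra)) (eps/4) ltac:(lra)) as [r [Hr Hr']].
    set (m' := Rmin (m + r / 2) b).
    assert (Hm1 : m < m') by (unfold m'; apply Rmin_glb_lt; lra).
    assert (Hm2 : m' <= b) by apply Rmin_r. assert (Hm3 : m' <= m + r / 2) by apply Rmin_l.
    assert (Gr := gron m m' ltac:(lra) Hm2 Gm).
    assert (Em' : E0 m').
    { split. lra. intros t Ht. destruct (Rle_dec m t).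
      - apply Gr; [|lra]. intros t' Ht'.
        assert (Q1 : Rabs (t' - m) < r) by (rewrite Rabs_right; lra).
        specialize (Hr' t' ltac:(lra) Q1).
        pose proof (Cmod_rev (g m) (g t')). rewrite Cmod_sub_sym in Hr'.
        rewrite Gm in H0. pose proof (Im_le (f m)). pose proof (Hfy m ltac:(lra)).
        rewrite Gm in Hr'. apply Rabs_le_between in H1. lra.
      - apply G1. lra. }
    apply Hub in Em'. lra. }
  intros u Hu. destruct (Req_dec u m). subst; auto. apply G1. lra.
Qed.
End Uniq.

Lemma Qf_lip eps z w : 0 < eps ->
  Cmod (Csub (Qf eps z) (Qf eps w)) <= 8 / eps ^ 2 * Cmod (Csub z w).
Proof.
  intros He. unfold Qf.
  set (a := kap eps z). set (c := kap eps w).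
  assert (Ha : eps / 2 <= Im a) by (unfold a, kap, Im; simpl; apply Rmax_r).
  assert (Hc : eps / 2 <= Im c) by (unfold c, kap, Im; simpl; apply Rmax_r).
  assert (Hac : Cmod (Csub a c) <= Cmod (Csub z w)).
  { unfold Cmod. apply sqrt_le_1_alt. rewrite !Csub_parts. unfold a, c, kap. cbn [Re Im fst snd].
    unfold Re, Im. assert (Rabs (Rmax (snd z) (eps / 2) - Rmax (snd w) (eps / 2)) <= Rabs (snd z - snd w)).
    { unfold Rmax. repeat destruct Rle_dec; unfold Rabs; repeat destruct Rcase_abs; lra. }
    rewrite <- (pow2_abs (Rmax (snd z) (eps / 2) - Rmax (snd w) (eps / 2))), <- (pow2_abs (snd z - snd w)).
    pose proof (Rabs_pos (Rmax (snd z) (eps / 2) - Rmax (snd w) (eps / 2))). nra. }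
  destruct (cdiv_parts a) as [A1 A2]. destruct (cdiv_parts c) as [C1 C2].
  set (a1 := Re a) in *. set (a2 := Im a) in *. set (c1 := Re c) in *. set (c2 := Im c) in *.
  assert (Ge : 0 < eps ^ 2) by nra.
  assert (HA : eps ^ 2 / 4 <= a1 ^ 2 + a2 ^ 2) by nra.
  assert (HC : eps ^ 2 / 4 <= c1 ^ 2 + c2 ^ 2) by nra.
  assert (Id : (-2 * a1 / (a1 ^ 2 + a2 ^ 2) - -2 * c1 / (c1 ^ 2 + c2 ^ 2)) ^ 2 +
               (2 * a2 / (a1 ^ 2 + a2 ^ 2) - 2 * c2 / (c1 ^ 2 + c2 ^ 2)) ^ 2
             = 4 * ((a1 - c1) ^ 2 + (a2 - c2) ^ 2) / ((a1 ^ 2 + a2 ^ 2) * (c1 ^ 2 + c2 ^ 2))).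
  { field. split; nra. }
  assert (Hd : (a1 - c1) ^ 2 + (a2 - c2) ^ 2 = Cmod (Csub a c) ^ 2).
  { rewrite Cmod_sq, Csub_parts. reflexivity. }
  pose proof (Cmod_ge0 (Csub a c)). pose proof (Cmod_ge0 (Csub z w)).
  apply Cmod_le_of_sq. apply Rmult_le_pos. apply Rlt_le, Rdiv_lt_0_compat; lra. auto.
  rewrite Csub_parts, A1, A2, C1, C2. cbn [Re Im fst snd]. rewrite Id, Hd.
  assert (P : eps ^ 2 / 4 * (eps ^ 2 / 4) <= (a1 ^ 2 + a2 ^ 2) * (c1 ^ 2 + c2 ^ 2)) by nra.
  apply Rle_trans with (4 * Cmod (Csub a c) ^ 2 / (eps ^ 2 / 4 * (eps ^ 2 / 4))).
  - unfold Rdiv. apply Rmult_le_compat_l. nra. apply Rinv_le_contravar. nra. auto.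
  - replace ((8 / eps ^ 2 * Cmod (Csub z w)) ^ 2) with (4 * Cmod (Csub z w) ^ 2 / (eps ^ 2 / 4 * (eps ^ 2 / 4))) by (field; lra).
    unfold Rdiv. apply Rmult_le_compat_r. apply Rlt_le, Rinv_0_lt_compat. nra. nra.
Qed.

Lemma Cmod_zt_diff s a c : Cmod (Csub (zt s a) (zt s c)) = Rabs (a - c).
Proof.
  rewrite !zt_parts, Csub_parts. unfold Re at 1 3, Im at 1 3. simpl.
  replace (Re s - a - (Re s - c), Im s - Im s) with (RtoC (c - a)) by (unfold RtoC; f_equal; ring).
  rewrite Cmod_RtoC. apply Rabs_minus_sym.
Qed.

Theorem lemma5p1 :
  forall (delta M T : R), 0 < delta -> 0 < T ->
  exists delta1, 0 < delta1 < delta /\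
  forall (lam dlam ddlam : Cpx -> Cpx) (U : Cpx -> Prop),
    C_open U ->
    (forall z, Eset T delta z -> U z) ->
    (forall z, U z -> C_has_deriv lam z (dlam z)) ->
    (forall z, U z -> C_has_deriv dlam z (ddlam z)) ->
    (forall t, 0 <= t <= T -> Im (lam (RtoC t)) = 0) ->
    (forall s t, 0 <= s <= T -> 0 <= t <= T -> s <> t ->
       Cmod (Csub (lam (RtoC t)) (lam (RtoC s))) / sqrt (Rabs (t - s)) <= 1) ->
    (forall z, Eset T delta z -> Cmod (dlam z) <= M /\ Cmod (ddlam z) <= M) ->
    forall (s : Cpx) (eps : R), E1set T delta1 s -> 0 < eps <= 1 ->
      exists f : R -> Cpx,
        is_ivp_solution dlam s eps (Re s + delta1) f /\
        (forall g : R -> Cpx, is_ivp_solution dlam s eps (Re s + delta1) g ->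
           forall u, 0 <= u <= Re s + delta1 -> g u = f u) /\
        (forall u, 0 <= u <= Re s + delta1 ->
           Rmax (sqrt (2 * u)) (eps / 2) <= Im (f u)).
Proof.
  intros delta M T hd hT.
  set (K := Rabs M + 1).
  assert (hK1 : 1 <= K) by (unfold K; pose proof (Rabs_pos M); lra).
  assert (hMK : M <= K) by (unfold K; pose proof (Rle_abs M); lra).
  set (c := 64000 * K ^ 2 * (2 * T + 5)).
  assert (hc : 64000 <= c) by (unfold c; nra).
  exists (Rmin (delta / 4) (1 / c)).
  set (d1 := Rmin (delta / 4) (1 / c)).
  assert (hd1 : 0 < d1) by (apply Rmin_pos; [lra| apply Rdiv_lt_0_compat; lra]).
  assert (hd1a : d1 <= delta / 4) by apply Rmin_l.
  assert (hd1c : d1 * c <= 1).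
  { assert (d1 <= 1 / c) by apply Rmin_r. apply (Rmult_le_compat_r c) in H; [|lra].
    unfold Rdiv in H. rewrite Rmult_assoc, Rinv_l in H; lra. }
  split. lra.
  intros lam dlam ddlam U HUo HU Hl Hdl Hre Hhol HM s eps [Hs1 Hs2] heps.
  assert (hd1d : 2 * d1 <= delta) by lra.
  assert (hd12 : d1 <= 1 / 2) by nra.
  assert (hdK : 1600 * K ^ 2 * d1 <= 1).
  { assert (1600 * K ^ 2 <= c) by (unfold c; nra). nra. }
  assert (hdY : 40 * K * (2 * T + 5) * d1 <= 1).
  { assert (K * (2 * T + 5) <= K ^ 2 * (2 * T + 5)) by (apply Rmult_le_compat_r; nra).
    assert (40 * K * (2 * T + 5) <= c).
    { assert (0 <= K ^ 2 * (2 * T + 5)) by nra. unfold c. replace (40 * K * (2 * T + 5)) with (40 * (K * (2 * T + 5))) by ring.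
      replace (64000 * K ^ 2 * (2 * T + 5)) with (64000 * (K ^ 2 * (2 * T + 5))) by ring. lra. }
    nra. }
  assert (hb : 0 < bb d1 s) by (unfold bb; lra).
  assert (hL : 0 < 8 / eps ^ 2) by (apply Rdiv_lt_0_compat; nra).
  assert (HDc : forall t, ccont (Dd d1 dlam s) t).
  { intros t e He. unfold Dd.
    assert (Hz : box T d1 (zt s (cl (bb d1 s) t))) by (apply box_zt; auto; apply cl_range; auto).
    destruct (dlam_cont T delta d1 dlam ddlam U hT hd1 hd1d HU Hdl _ Hz e He) as [r [Hr Hr']].
    exists r. split; auto. intros t' Ht'. apply Hr'. rewrite Cmod_zt_diff.
    eapply Rle_lt_trans. apply cl_lip. all: auto. }
  assert (HDb : forall t, Cmod (Dd d1 dlam s t) <= K).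
  { intros t. unfold Dd. eapply Rle_trans; [|exact hMK]. apply HM. apply (box_E T delta d1 hT hd1 hd1d).
    apply box_zt; auto. apply cl_range; auto. }
  destruct (picard_exists (bb d1 s) (Cmul (RtoC eps) Ci) (Qf eps) (8 / eps ^ 2) K (Dd d1 dlam s)
     hb hL (fun z w => Qf_lip eps z w ltac:(lra)) HDc HDb) as [F [HF0 [HFc HFd]]].
  assert (Hf0 : F 0 = (0, eps)) by (rewrite HF0; unfold Cmul, RtoC, Ci, Re, Im; simpl; f_equal; ring).
  pose proof (all_good T delta d1 M K lam dlam ddlam U hT hd1 hd1d HU Hl Hdl Hre Hhol HM hMK hK1 hd12 hdK hdY
                s Hs1 Hs2 eps heps F Hf0 HFc HFd) as Hgood.
  assert (Hge : forall u, 0 <= u <= bb d1 s -> eps / 2 <= Im (F u)).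
  { intros u Hu. apply (good_ge eps heps F u ltac:(lra)). apply Hgood; auto. }
  assert (Hder : forall u, 0 <= u <= bb d1 s ->
     has_deriv_within F 0 (bb d1 s) u (Cadd (Cdiv (RtoC (-2)) (F u)) (dlam (Csub s (RtoC u))))).
  { intros u Hu. specialize (HFd u Hu).
    assert (E1 : Qf eps (F u) = Cdiv (RtoC (-2)) (F u)).
    { unfold Qf, kap. rewrite Rmax_left by (apply Hge; auto). destruct (F u); reflexivity. }
    assert (E2 : Dd d1 dlam s u = dlam (Csub s (RtoC u))).
    { unfold Dd. rewrite cl_id by auto. reflexivity. }
    rewrite E1, E2 in HFd. exact HFd. }
  exists F. split; [|split].
  - split. exact HF0. intros u Hu. split.
    + intros E. pose proof (Hge u Hu). rewrite E in H. unfold RtoC, Im in H. simpl in H. lra.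
    + apply Hder. exact Hu.
  - intros g [Hg0 Hg] u Hu.
    apply (uniq (bb d1 s) eps (fun u => dlam (Csub s (RtoC u))) F g hb ltac:(lra)); auto.
    + rewrite Hg0, HF0. reflexivity.
    + intros v Hv. apply (Hg v Hv).
  - intros u Hu. destruct (Hgood u Hu) as [G1 G2]. apply Rmax_lub.
    + rewrite <- (sqrt_pow2 (Im (F u))) by lra. apply sqrt_le_1_alt. pose proof (pow2_ge_0 eps). lra.
    + apply Hge; auto.
Qed.
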